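(* Let $\sigma:\mathbb{R}\to\mathbb{R}$ be a non-decreasing sigmoidal function (i.e. $\lim_{x\to-\infty}\sigma(x)=0$, $\lim_{x\to+\infty}\sigma(x)=1$) such that $\sigma(x)-1/2$ is odd, $\sigma\in C^2(\mathbb{R})$ is concave for $x\ge 0$, and $\sigma(x)=\mathcal{O}(|x|^{-1-\alpha})$ as $x\to-\infty$ for some $\alpha>2$. Let $\phi_\sigma(x):=\frac12[\sigma(x+1)-\sigma(x-1)]$, let $\widehat{\phi_\sigma}(v):=\int_{\mathbb{R}}\phi_\sigma(x)e^{-ixv}\,dx$ be its Fourier transform, and for $\nu\in\mathbb{N}$ let $\mathcal{A}_\nu(\phi_\sigma,u):=\sum_{k\in\mathbb{Z}}\phi_\sigma(u-k)(k-u)^\nu$, $u\in\mathbb{R}$. If the condition $$\left[\widehat{\phi_\sigma}\right]^{(s)}(2\pi k)=0,\quad k\in\mathbb{Z}\setminus\{0\},\quad s=1,2,$$ holds, then $$\mathcal{A}_1(\phi_\sigma,u)=0,\qquad \mathcal{A}_2(\phi_\sigma,u)=\left[\widehat{\phi_\sigma}\right]''(0)>0,\qquad u\in\mathbb{R}.$$ In particular, if $\phi_\sigma$ is band-limited with $\mathrm{supp}\,\widehat{\phi_\sigma}\subset[-2\pi,2\pi]$, the condition $\left[\widehat{\phi_\sigma}\right]^{(s)}(2\pi k)=0$ for $k\in\mathbb{Z}\setminus\{0\}$, $s=1,2$, trivially holds.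
   Context: $\sigma$ is a non-decreasing sigmoidal function satisfying: $\sigma(x)-1/2$ is odd; $\sigma\in C^2(\mathbb{R})$ concave for $x\geq0$; $\sigma(x)=\mathcal{O}(|x|^{-1-\alpha})$ as $x\to-\infty$. The density $\phi_\sigma(x)=\frac12[\sigma(x+1)-\sigma(x-1)]$ is even and satisfies $\sum_{k\in\mathbb{Z}}\phi_\sigma(u-k)=1$. The Fourier transform of $f\in L^1(\mathbb{R})$ is $\widehat f(v)=\int_{\mathbb{R}}f(x)e^{-ixv}dx$. The algebraic moments are $\mathcal{A}_\nu(\phi_\sigma,u)=\sum_{k\in\mathbb{Z}}\phi_\sigma(u-k)(k-u)^\nu$. *)

(* Defs.v *)
From Stdlib Require Import Reals ZArith.
From Coquelicot Require Import Coquelicot.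
Open Scope R_scope.

Definition phi_sigma (sigma : R -> R) (x : R) : R :=
  / 2 * (sigma (x + 1) - sigma (x - 1)).

(* Fourier transform  \hat f(v) = \int_R f(x) e^{-ixv} dx, split into its
   real and imaginary parts (improper Riemann integrals over R):
   Re \hat f(v) =  \int f(x) cos(xv) dx,  Im \hat f(v) = - \int f(x) sin(xv) dx *)
Definition FT_re (f : R -> R) (v : R) : R :=
  @RInt_gen R_CompleteNormedModule (fun x => f x * cos (x * v))
    (Rbar_locally m_infty) (Rbar_locally p_infty).

Definition FT_im (f : R -> R) (v : R) : R :=
  - @RInt_gen R_CompleteNormedModule (fun x => f x * sin (x * v))
    (Rbar_locally m_infty) (Rbar_locally p_infty).

Definition is_zsum (a : Z -> R) (l : R) : Prop :=
  exists l1 l2,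
    is_series (fun n : nat => a (Z.of_nat n)) l1 /\
    is_series (fun n : nat => a (- Z.of_nat n - 1)%Z) l2 /\
    l = l1 + l2.

Definition is_moment (phi : R -> R) (nu : nat) (u l : R) : Prop :=
  is_zsum (fun k => phi (u - IZR k) * (IZR k - u) ^ nu) l.

Definition sigmoidal_hyp (sigma : R -> R) (alpha : R) : Prop :=
  (forall x y, x <= y -> sigma x <= sigma y) /\
  is_lim sigma m_infty 0 /\ is_lim sigma p_infty 1 /\
  (forall x, sigma (- x) - / 2 = - (sigma x - / 2)) /\
  (forall x, ex_derive sigma x) /\
  (forall x, ex_derive (Derive sigma) x) /\
  (forall x, continuous (Derive_n sigma 2) x) /\
  (forall x y t, 0 <= x -> 0 <= y -> 0 <= t <= 1 ->
     t * sigma x + (1 - t) * sigma y <= sigma (t * x + (1 - t) * y)) /\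
  (exists C M, M < 0 /\ forall x, x <= M ->
     Rabs (sigma x) <= C * Rpower (Rabs x) (- 1 - alpha)).

(* Condition [\hat phi]^{(s)}(2 pi k) = 0, k in Z\{0}, s = 1,2
   (derivatives of the complex function, componentwise) *)
Definition FT_deriv_cond (phi : R -> R) : Prop :=
  forall (k : Z) (s : nat), k <> 0%Z -> (s = 1 \/ s = 2)%nat ->
    is_derive_n (FT_re phi) s (2 * PI * IZR k) 0 /\
    is_derive_n (FT_im phi) s (2 * PI * IZR k) 0.

(* Main.v *)
Require Import Defs.
From Stdlib Require Import Reals ZArith Lra Lia.
From Coquelicot Require Import Coquelicot.
Open Scope R_scope.


Lemma cont_of_derive (f : R -> R) x : ex_derive f x -> continuous f x.
Proof. intros H. apply (@ex_derive_continuous R_AbsRing R_NormedModule). exact H. Qed.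

Section Weight.
Variable p : R.
Hypothesis Hp : 1 < p.

Definition w (x : R) : R := Rpower (1 + Rabs x) (- p).
Definition Tl (s : R) : R := Rpower (1 + s) (1 - p) / (p - 1).

Lemma w_pos x : 0 < w x.
Proof. unfold w, Rpower. apply exp_pos. Qed.

Lemma w_even x : w (- x) = w x.
Proof. unfold w. now rewrite Rabs_Ropp. Qed.

Lemma Rpower_neg_dec a b q : 0 <= q -> 0 < a <= b -> Rpower b (- q) <= Rpower a (- q).
Proof.
  intros Hq Hab. rewrite !Rpower_Ropp.
  apply Rinv_le_contravar. unfold Rpower; apply exp_pos.
  apply Rle_Rpower_l; lra.
Qed.

Lemma w_dec x y : 0 <= x <= y -> w y <= w x.
Proof.
  intros H. unfold w. rewrite !Rabs_pos_eq by lra.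
  apply Rpower_neg_dec; lra.
Qed.

Lemma Rpower_1_base y : Rpower 1 y = 1.
Proof. unfold Rpower. rewrite ln_1, Rmult_0_r. apply exp_0. Qed.

Lemma w_le1 x : w x <= 1.
Proof.
  unfold w. rewrite <- (Rpower_1_base (-p)) at 2.
  apply (Rpower_neg_dec 1 (1 + Rabs x) p). lra. generalize (Rabs_pos x); lra.
Qed.

Lemma w_cont x : continuous w x.
Proof.
  unfold w.
  apply (continuous_comp Rabs (fun y => Rpower (1 + y) (- p))).
  apply continuous_Rabs.
  apply cont_of_derive. unfold Rpower.
  auto_derive. generalize (Rabs_pos x); lra.
Qed.

Lemma Tl_deriv s : -1 < s -> is_derive Tl s (- Rpower (1 + s) (- p)).
Proof.
  intros Hs. unfold Tl, Rpower.
  auto_derive. lra.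
  replace (-p) with ((1-p) + (-1)) by ring.
  rewrite Rmult_plus_distr_r, exp_plus.
  replace (-1 * ln (1 + s)) with (ln (/ (1+s))) by (rewrite ln_Rinv by lra; ring).
  rewrite exp_ln by (apply Rinv_0_lt_compat; lra).
  field. lra.
Qed.

Lemma w_int_pos s t : 0 <= s <= t -> is_RInt w s t (Tl s - Tl t).
Proof.
  intros H.
  assert (E : Tl s - Tl t = minus ((fun x => - Tl x) t) ((fun x => - Tl x) s)).
  { unfold minus, plus, opp; simpl. ring. }
  rewrite E. apply (@is_RInt_derive R_CompleteNormedModule (fun x => - Tl x) w).
  - intros x Hx. rewrite Rmin_left, Rmax_right in Hx by lra.
    unfold w. rewrite Rabs_pos_eq by lra.
    replace (Rpower (1 + x) (- p)) with (- (- Rpower (1 + x) (- p))) by ring.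
    apply (is_derive_opp Tl). apply Tl_deriv. lra.
  - intros x _. apply w_cont.
Qed.

Lemma w_int_neg s t : 0 <= s <= t -> is_RInt w (- t) (- s) (Tl s - Tl t).
Proof.
  intros H.
  assert (E : Tl s - Tl t = minus ((fun x => Tl (- x)) (- s)) ((fun x => Tl (- x)) (- t))).
  { unfold minus, plus, opp; simpl. rewrite !Ropp_involutive. ring. }
  rewrite E. apply (@is_RInt_derive R_CompleteNormedModule (fun x => Tl (- x)) w).
  - intros x Hx. rewrite Rmin_left, Rmax_right in Hx by lra.
    unfold w. rewrite Rabs_left1 by lra.
    replace (Rpower (1 + - x) (- p)) with ((-1) * - (Rpower (1 + - x) (- p))) by ring.
    apply (is_derive_comp Tl (fun x => - x)).
    apply Tl_deriv. lra.
    auto_derive; auto; ring.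
  - intros x _. apply w_cont.
Qed.

Lemma Tl_nonneg s : -1 < s -> 0 <= Tl s.
Proof.
  intros Hs. unfold Tl. apply Rmult_le_pos.
  unfold Rpower; left; apply exp_pos.
  left; apply Rinv_0_lt_compat; lra.
Qed.

Lemma Tl_dec s t : 0 <= s <= t -> Tl t <= Tl s.
Proof.
  intros H. unfold Tl. apply Rmult_le_compat_r.
  left; apply Rinv_0_lt_compat; lra.
  replace (1 - p) with (- (p - 1)) by ring.
  apply Rpower_neg_dec; lra.
Qed.

Lemma Tl_small eps : 0 < eps -> exists A, 0 <= A /\ forall B, A <= B -> Tl B < eps.
Proof.
  intros He.
  set (c := ln (eps * (p - 1)) / (1 - p)).
  exists (exp (Rmax 0 c + 1) - 1). split.
  { assert (1 <= exp (Rmax 0 c + 1)).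
    { assert (exp 0 < exp (Rmax 0 c + 1)) by (apply exp_increasing; generalize (Rmax_l 0 c); lra).
      rewrite exp_0 in H. lra. }
    lra. }
  intros B HB.
  apply Rle_lt_trans with (Tl (exp (Rmax 0 c + 1) - 1)).
  { apply Tl_dec. split; [|lra].
    assert (1 <= exp (Rmax 0 c + 1)).
    { assert (exp 0 < exp (Rmax 0 c + 1)) by (apply exp_increasing; generalize (Rmax_l 0 c); lra).
      rewrite exp_0 in H. lra. }
    lra. }
  unfold Tl. replace (1 + (exp (Rmax 0 c + 1) - 1)) with (exp (Rmax 0 c + 1)) by ring.
  unfold Rpower. rewrite ln_exp.
  apply (Rmult_lt_reg_r (p - 1)). lra.
  unfold Rdiv. rewrite Rmult_assoc, Rinv_l, Rmult_1_r by lra.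
  rewrite <- (exp_ln (eps * (p - 1))) by (apply Rmult_lt_0_compat; lra).
  apply exp_increasing.
  assert (Hc : (1 - p) * c = ln (eps * (p - 1))) by (unfold c; field; lra).
  assert (c <= Rmax 0 c) by apply Rmax_r.
  nra.
Qed.

End Weight.

Lemma ex_RInt_cont (f : R -> R) a b : (forall x, continuous f x) -> ex_RInt f a b.
Proof. intros H. apply (@ex_RInt_continuous R_CompleteNormedModule). intros; apply H. Qed.

Lemma RInt_Chasles_R (f : R -> R) a b c : (forall x, continuous f x) ->
  RInt f a b + RInt f b c = RInt f a c.
Proof. intros H. apply (@RInt_Chasles R_CompleteNormedModule); apply ex_RInt_cont; auto. Qed.

Lemma RInt_scal_R (f : R -> R) k a b : (forall x, continuous f x) ->
  RInt (fun x => k * f x) a b = k * RInt f a b.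
Proof. intros H. apply (@RInt_scal R_CompleteNormedModule). apply ex_RInt_cont; auto. Qed.

Lemma RInt_abs_le (f g : R -> R) a b : a <= b -> (forall x, continuous f x) -> (forall x, continuous g x) ->
  (forall x, a <= x <= b -> Rabs (f x) <= g x) -> Rabs (RInt f a b) <= RInt g a b.
Proof.
  intros Hab Hf Hg H.
  eapply Rle_trans. apply abs_RInt_le; auto. apply ex_RInt_cont; auto.
  apply RInt_le; auto.
  apply ex_RInt_cont. intros x; apply continuous_Rabs_comp; auto.
  apply ex_RInt_cont; auto.
  intros x Hx; apply H; lra.
Qed.

Section Gen.
Variable p : R.
Hypothesis Hp : 1 < p.
Variable f : R -> R.
Variable K : R.
Hypothesis Hfc : forall x, continuous f x.
Hypothesis Hfb : forall x, Rabs (f x) <= K * w p x.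

Lemma K_nonneg : 0 <= K.
Proof.
  generalize (Hfb 0) (w_pos p 0) (Rabs_pos (f 0)); intros.
  destruct (Rle_dec 0 K); auto. nra.
Qed.

Lemma Kw_cont x : continuous (fun x => K * w p x) x.
Proof.
  apply (@continuous_mult R_UniformSpace R_AbsRing (fun _ => K) (w p)).
  apply continuous_const. apply w_cont.
Qed.

Lemma tail_r A b : 0 <= A <= b -> Rabs (RInt f A b) <= K * Tl p A.
Proof.
  intros H.
  eapply Rle_trans.
  { apply RInt_abs_le with (g := fun x => K * w p x). lra. exact Hfc.
    intros; apply Kw_cont. intros; apply Hfb. }
  rewrite RInt_scal_R by (intros; apply w_cont).
  rewrite (is_RInt_unique _ _ _ _ (w_int_pos p Hp A b H)).
  generalize (Tl_nonneg p Hp b) K_nonneg; intros. 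
  assert (0 <= Tl p b) by (apply Tl_nonneg; auto; lra).
  nra.
Qed.

Lemma tail_l A a : a <= - A -> 0 <= A -> Rabs (RInt f a (- A)) <= K * Tl p A.
Proof.
  intros H H0.
  eapply Rle_trans.
  { apply RInt_abs_le with (g := fun x => K * w p x). lra. exact Hfc.
    intros; apply Kw_cont. intros; apply Hfb. }
  rewrite RInt_scal_R by (intros; apply w_cont).
  replace a with (- (- a)) by ring.
  rewrite (is_RInt_unique _ _ _ _ (w_int_neg p Hp A (-a) ltac:(lra))).
  generalize K_nonneg; intros.
  assert (0 <= Tl p (-a)) by (apply Tl_nonneg; auto; lra).
  nra.
Qed.

Lemma mid_approx a b A : a <= - A -> 0 <= A -> A <= b ->
  Rabs (RInt f a b - RInt f (- A) A) <= 2 * K * Tl p A.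
Proof.
  intros H1 H2 H3.
  rewrite <- (RInt_Chasles_R f a (-A) b Hfc).
  rewrite <- (RInt_Chasles_R f (-A) A b Hfc).
  replace (RInt f a (- A) + (RInt f (- A) A + RInt f A b) - RInt f (- A) A)
    with (RInt f a (- A) + RInt f A b) by ring.
  eapply Rle_trans. apply Rabs_triang.
  generalize (tail_l A a H1 H2) (tail_r A b ltac:(lra)). lra.
Qed.

Lemma gen_int : exists l, is_RInt_gen f (Rbar_locally m_infty) (Rbar_locally p_infty) l /\
  forall A, 0 <= A -> Rabs (l - RInt f (- A) A) <= 2 * K * Tl p A.
Proof.
  set (u := fun n : nat => RInt f (- INR n) (INR n)).
  assert (Hc : ex_finite_lim_seq u).
  { apply ex_lim_seq_cauchy_corr. intros eps.
    destruct (Tl_small p Hp (eps / (4 * K + 1))) as [A [HA HAB]].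
    { apply Rdiv_lt_0_compat. apply cond_pos. generalize K_nonneg; lra. }
    destruct (INR_unbounded A) as [N HN].
    exists N. intros n m Hn Hm.
    assert (HnN : INR N <= INR n) by (apply le_INR; lia).
    assert (HmN : INR N <= INR m) by (apply le_INR; lia).
    assert (H0 : 0 <= INR N) by apply pos_INR.
    generalize (mid_approx (- INR n) (INR n) (INR N) ltac:(lra) H0 HnN).
    generalize (mid_approx (- INR m) (INR m) (INR N) ltac:(lra) H0 HmN).
    intros X1 X2. unfold u.
    assert (T : Tl p (INR N) < eps / (4 * K + 1)) by (apply HAB; lra).
    assert (T2 : 4 * K * Tl p (INR N) < eps).
    { generalize K_nonneg; intros.
      assert (0 <= Tl p (INR N)) by (apply Tl_nonneg; auto; lra).
      apply Rle_lt_trans with ((4 * K + 1) * Tl p (INR N)). nra.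
      replace (pos eps) with ((4 * K + 1) * (eps / (4 * K + 1))) by (field; lra).
      apply Rmult_lt_compat_l. lra. auto. }
    eapply Rle_lt_trans. 2: exact T2.
    replace (RInt f (- INR n) (INR n) - RInt f (- INR m) (INR m)) with
      ((RInt f (- INR n) (INR n) - RInt f (- INR N) (INR N)) -
       (RInt f (- INR m) (INR m) - RInt f (- INR N) (INR N))) by ring.
    eapply Rle_trans. apply Rabs_triang. rewrite Rabs_Ropp. lra. }
  destruct Hc as [l Hl].
  assert (Hb : forall A, 0 <= A -> Rabs (l - RInt f (- A) A) <= 2 * K * Tl p A).
  { intros A HA. apply is_lim_seq_Reals in Hl.
    destruct (Rle_dec (Rabs (l - RInt f (- A) A)) (2 * K * Tl p A)) as [Hle|Hgt]; auto.
    exfalso. apply Rnot_le_lt in Hgt.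
    destruct (Hl (Rabs (l - RInt f (- A) A) - 2 * K * Tl p A)) as [N HN]. lra.
    destruct (INR_unbounded A) as [M HM].
    specialize (HN (max N M) ltac:(lia)).
    assert (INR M <= INR (max N M)) by (apply le_INR; lia).
    generalize (mid_approx (- INR (max N M)) (INR (max N M)) A ltac:(lra) HA ltac:(lra)).
    unfold R_dist, u in HN. intros X.
    generalize (Rabs_triang (l - RInt f (- INR (Init.Nat.max N M)) (INR (Init.Nat.max N M)))
       (RInt f (- INR (Init.Nat.max N M)) (INR (Init.Nat.max N M)) - RInt f (- A) A)).
    replace (l - RInt f (- INR (Init.Nat.max N M)) (INR (Init.Nat.max N M)) +
      (RInt f (- INR (Init.Nat.max N M)) (INR (Init.Nat.max N M)) - RInt f (- A) A))
      with (l - RInt f (- A) A) by ring.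
    rewrite Rabs_minus_sym in HN. lra. }
  exists l. split; auto.
  intros P [eps Heps].
  destruct (Tl_small p Hp (eps / (4 * K + 1))) as [A [HA HAB]].
  { apply Rdiv_lt_0_compat. apply cond_pos. generalize K_nonneg; lra. }
  assert (T2 : 4 * K * Tl p A < eps).
  { generalize K_nonneg; intros.
    assert (0 <= Tl p A) by (apply Tl_nonneg; auto; lra).
    assert (Tl p A < eps / (4 * K + 1)) by (apply HAB; lra).
    apply Rle_lt_trans with ((4 * K + 1) * Tl p A). nra.
    replace (pos eps) with ((4 * K + 1) * (eps / (4 * K + 1))) by (field; lra).
    apply Rmult_lt_compat_l. lra. auto. }
  exists (fun a => a < - A) (fun b => A < b).
  - exists (- A). auto.
  - exists A. auto.
  - intros a b Ha Hb'. simpl. exists (RInt f a b). split.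
    + apply (@RInt_correct R_CompleteNormedModule). apply ex_RInt_cont; auto.
    + apply Heps. unfold ball; simpl; unfold AbsRing_ball, abs, minus, plus, opp; simpl.
      generalize (mid_approx a b A ltac:(lra) HA ltac:(lra)) (Hb A HA).
      intros X Y.
      generalize (Rabs_triang (RInt f a b - RInt f (- A) A) (RInt f (- A) A - l)).
      replace (RInt f a b - RInt f (- A) A + (RInt f (- A) A - l)) with (RInt f a b + - l) by ring.
      rewrite Rabs_minus_sym in Y. lra.
Qed.

End Gen.

Definition IR (f : R -> R) : R :=
  @RInt_gen R_CompleteNormedModule f (Rbar_locally m_infty) (Rbar_locally p_infty).

Definition domw (p : R) (f : R -> R) (K : R) : Prop :=
  (forall x, continuous f x) /\ (forall x, Rabs (f x) <= K * w p x).

Section IRlemmas.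
Variable p : R.
Hypothesis Hp : 1 < p.

Lemma IR_is f K : domw p f K ->
  is_RInt_gen f (Rbar_locally m_infty) (Rbar_locally p_infty) (IR f).
Proof.
  intros [Hc Hb]. destruct (gen_int p Hp f K Hc Hb) as [l [Hl _]].
  unfold IR. rewrite (is_RInt_gen_unique f l Hl). exact Hl.
Qed.

Lemma IR_bound f K : domw p f K -> forall A, 0 <= A ->
  Rabs (IR f - RInt f (- A) A) <= 2 * K * Tl p A.
Proof.
  intros [Hc Hb]. destruct (gen_int p Hp f K Hc Hb) as [l [Hl HA]].
  unfold IR. rewrite (is_RInt_gen_unique f l Hl). exact HA.
Qed.

Lemma IR_abs f K : domw p f K -> Rabs (IR f) <= 2 * K * Tl p 0.
Proof.
  intros H. generalize (IR_bound f K H 0 (Rle_refl 0)).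
  rewrite Ropp_0, RInt_point. unfold zero; simpl. rewrite Rminus_0_r. auto.
Qed.

Lemma IR_plus f g Kf Kg : domw p f Kf -> domw p g Kg ->
  IR (fun x => f x + g x) = IR f + IR g.
Proof.
  intros Hf Hg. unfold IR at 1.
  apply (is_RInt_gen_unique (fun x => f x + g x)).
  apply (is_RInt_gen_plus f g). apply (IR_is f Kf Hf). apply (IR_is g Kg Hg).
Qed.

Lemma IR_scal f c Kf : domw p f Kf -> IR (fun x => c * f x) = c * IR f.
Proof.
  intros Hf. unfold IR at 1.
  apply (is_RInt_gen_unique (fun x => c * f x)).
  apply (is_RInt_gen_scal f c). apply (IR_is f Kf Hf).
Qed.

Lemma IR_ext f g : (forall x, f x = g x) -> IR f = IR g.
Proof.
  intros H. unfold IR. f_equal. apply FunctionalExtensionality.functional_extensionality. auto.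
Qed.

Lemma domw_plus f g Kf Kg : domw p f Kf -> domw p g Kg -> domw p (fun x => f x + g x) (Kf + Kg).
Proof.
  intros [Hf1 Hf2] [Hg1 Hg2]. split.
  - intros x. apply (@continuous_plus R_UniformSpace R_AbsRing R_NormedModule f g); auto.
  - intros x. eapply Rle_trans. apply Rabs_triang. generalize (Hf2 x) (Hg2 x). lra.
Qed.

Lemma domw_scal f c Kf : domw p f Kf -> domw p (fun x => c * f x) (Rabs c * Kf).
Proof.
  intros [Hf1 Hf2]. split.
  - intros x. apply (@continuous_mult R_UniformSpace R_AbsRing (fun _ => c) f); auto.
    apply continuous_const.
  - intros x. rewrite Rabs_mult, Rmult_assoc. apply Rmult_le_compat_l. apply Rabs_pos. auto.
Qed.

Lemma domw_le f g K : (forall x, continuous f x) -> domw p g K ->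
  (forall x, Rabs (f x) <= Rabs (g x)) -> domw p f K.
Proof.
  intros Hc [_ Hg] H. split; auto. intros x. eapply Rle_trans. apply H. auto.
Qed.

Lemma IR_odd f K : domw p f K -> (forall x, f (- x) = - f x) -> IR f = 0.
Proof.
  intros Hf Ho.
  assert (Hz : forall A, RInt f (- A) A = 0).
  { intros A.
    assert (E : RInt f (- A) A = RInt f A (- A)).
    { apply is_RInt_unique.
      apply (is_RInt_ext (fun y => opp (f (- y)))).
      { intros x _. rewrite Ho. unfold opp; simpl. ring. }
      apply (@is_RInt_comp_opp R_NormedModule f).
      rewrite Ropp_involutive. apply (@RInt_correct R_CompleteNormedModule).
      apply ex_RInt_cont. apply Hf. }
    assert (E2 : RInt f A (- A) = - RInt f (- A) A).
    { symmetry. apply (opp_RInt_swap f (-A) A). apply ex_RInt_cont; apply Hf. }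
    lra. }
  destruct (Rle_dec 0 K) as [HK|HK].
  2:{ exfalso. destruct Hf as [_ Hb]. generalize (Hb 0) (w_pos p 0) (Rabs_pos (f 0)). nra. }
  apply Rabs_eq_0. apply Rle_antisym. 2: apply Rabs_pos.
  apply Rnot_lt_le. intros Hlt.
  destruct (Tl_small p Hp (Rabs (IR f) / (2 * K + 1))) as [A [HA HB]].
  { apply Rdiv_lt_0_compat; lra. }
  specialize (HB A (Rle_refl A)).
  generalize (IR_bound f K Hf A HA). rewrite Hz, Rminus_0_r. intros X.
  assert (0 <= Tl p A) by (apply Tl_nonneg; auto; lra).
  assert (Rabs (IR f) = (2 * K + 1) * (Rabs (IR f) / (2 * K + 1))) by (field; lra).
  nra.
Qed.

End IRlemmas.


Lemma sin_lip a b : Rabs (sin (a + b) - sin a) <= Rabs b.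
Proof.
  destruct (MVT_abs sin cos a (a + b)) as [c [Hc _]].
  { intros c _. apply derivable_pt_lim_sin. }
  rewrite Hc. replace (a + b - a) with b by ring.
  rewrite <- (Rmult_1_l (Rabs b)) at 2. apply Rmult_le_compat_r. apply Rabs_pos.
  apply Rabs_le; generalize (COS_bound c); lra.
Qed.

Lemma cos_lip a b : Rabs (cos (a + b) - cos a) <= Rabs b.
Proof.
  destruct (MVT_abs cos (fun x => - sin x) a (a + b)) as [c [Hc _]].
  { intros c _. apply derivable_pt_lim_cos. }
  rewrite Hc. replace (a + b - a) with b by ring.
  rewrite <- (Rmult_1_l (Rabs b)) at 2. apply Rmult_le_compat_r. apply Rabs_pos.
  rewrite Rabs_Ropp. apply Rabs_le; generalize (SIN_bound c); lra.
Qed.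

Lemma cos_taylor a b : Rabs (cos (a + b) - cos a + b * sin a) <= b ^ 2.
Proof.
  destruct (MVT_abs (fun t => cos (a + t) - cos a + t * sin a)
                    (fun t => - sin (a + t) + sin a) 0 b) as [c [Hc Hcb]].
  { intros c _. apply is_derive_Reals. auto_derive; auto. ring. }
  rewrite Rplus_0_r, Rmult_0_l, Rplus_0_r, Rminus_diag, Rminus_0_r, Rminus_0_r in Hc.
  rewrite Hc.
  assert (Rabs c <= Rabs b).
  { unfold Rmin, Rmax in Hcb. destruct (Rle_dec 0 b).
    rewrite !Rabs_pos_eq; lra. rewrite !Rabs_left1; lra. }
  replace (- sin (a + c) + sin a) with (- (sin (a + c) - sin a)) by ring.
  rewrite Rabs_Ropp. generalize (sin_lip a c) (Rabs_pos b) (Rabs_pos c). intros.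
  replace (b ^ 2) with (Rabs b * Rabs b) by (rewrite <- Rabs_mult; rewrite Rabs_pos_eq; [ring| nra]).
  apply Rmult_le_compat_r; lra.
Qed.

Lemma sin_taylor a b : Rabs (sin (a + b) - sin a - b * cos a) <= b ^ 2.
Proof.
  destruct (MVT_abs (fun t => sin (a + t) - sin a - t * cos a)
                    (fun t => cos (a + t) - cos a) 0 b) as [c [Hc Hcb]].
  { intros c _. apply is_derive_Reals. auto_derive; auto. ring. }
  rewrite Rplus_0_r, Rmult_0_l, Rminus_diag, Rminus_0_r, Rminus_0_r in Hc.
  rewrite Rminus_0_r in Hc. rewrite Hc.
  assert (Rabs c <= Rabs b).
  { unfold Rmin, Rmax in Hcb. destruct (Rle_dec 0 b).
    rewrite !Rabs_pos_eq; lra. rewrite !Rabs_left1; lra. }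
  generalize (cos_lip a c) (Rabs_pos b) (Rabs_pos c). intros.
  replace (b ^ 2) with (Rabs b * Rabs b) by (rewrite <- Rabs_mult; rewrite Rabs_pos_eq; [ring| nra]).
  apply Rmult_le_compat_r; lra.
Qed.

Lemma cont_mult (f g : R -> R) x : continuous f x -> continuous g x -> continuous (fun x => f x * g x) x.
Proof. intros; apply (@continuous_mult R_UniformSpace R_AbsRing f g); auto. Qed.
Lemma cont_plus (f g : R -> R) x : continuous f x -> continuous g x -> continuous (fun x => f x + g x) x.
Proof. intros; apply (@continuous_plus R_UniformSpace R_AbsRing R_NormedModule f g); auto. Qed.
Lemma cont_opp (f : R -> R) x : continuous f x -> continuous (fun x => - f x) x.
Proof. intros; apply (@continuous_opp R_UniformSpace R_AbsRing R_NormedModule f); auto. Qed.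
Lemma cont_minus (f g : R -> R) x : continuous f x -> continuous g x -> continuous (fun x => f x - g x) x.
Proof. intros; apply cont_plus; auto; apply cont_opp; auto. Qed.
Lemma cont_const (c : R) x : continuous (fun _ : R => c) x.
Proof. apply continuous_const. Qed.
Lemma cont_id x : continuous (fun x : R => x) x.
Proof. apply continuous_id. Qed.
Lemma cont_cos (f : R -> R) x : continuous f x -> continuous (fun x => cos (f x)) x.
Proof. apply continuous_cos_comp. Qed.
Lemma cont_sin (f : R -> R) x : continuous f x -> continuous (fun x => sin (f x)) x.
Proof. apply continuous_sin_comp. Qed.
Lemma cont_pow2 (f : R -> R) x : continuous f x -> continuous (fun x => f x ^ 2) x.
Proof. intros H. apply (continuous_ext (fun x => f x * f x) (fun x => f x ^ 2)).
  intros y; simpl; ring. apply cont_mult; auto. Qed.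

Lemma cont_pow (f : R -> R) n x : continuous f x -> continuous (fun x => f x ^ n) x.
Proof.
  intros H. induction n.
  - apply (continuous_ext (fun _ => 1) (fun x => f x ^ 0)). intros; simpl; auto. apply cont_const.
  - apply (continuous_ext (fun x => f x * f x ^ n) (fun x => f x ^ S n)). intros; simpl; auto.
    apply cont_mult; auto.
Qed.

Ltac cont1 := match goal with
 | |- continuous (fun x => _ * _) _ => apply cont_mult
 | |- continuous (fun x => _ + _) _ => apply cont_plus
 | |- continuous (fun x => _ - _) _ => apply cont_minus
 | |- continuous (fun x => - _) _ => apply cont_opp
 | |- continuous (fun x => cos _) _ => apply cont_cos
 | |- continuous (fun x => sin _) _ => apply cont_sin
 | |- continuous (fun x => _ ^ 2) _ => apply cont_pow2
 | |- continuous (fun x => _ ^ _) _ => apply cont_pow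
 | |- continuous (fun x => x) _ => apply cont_id
 | |- continuous Ropp _ => apply (cont_opp (fun x => x))
 | |- continuous (fun x => ?c) _ => apply cont_const
 | |- continuous _ _ => solve [auto]
 end.
Ltac cont := repeat cont1.

Lemma deriv_from_small (f : R -> R) x l :
  (forall eps, 0 < eps -> exists delta, 0 < delta /\ forall h, Rabs h < delta ->
     Rabs (f (x + h) - f x - h * l) <= eps * Rabs h) -> derivable_pt_lim f x l.
Proof.
  intros H eps Heps.
  destruct (H (eps / 2)) as [d [Hd Hh]]. lra.
  exists (mkposreal d Hd). intros h Hh0 Hhd. simpl in Hhd.
  specialize (Hh h Hhd).
  replace ((f (x + h) - f x) / h - l) with ((f (x + h) - f x - h * l) / h) by (field; auto).
  unfold Rdiv. rewrite Rabs_mult, Rabs_inv.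
  assert (0 < Rabs h) by (apply Rabs_pos_lt; auto).
  apply Rle_lt_trans with (eps / 2 * Rabs h * / Rabs h).
  apply Rmult_le_compat_r. left; apply Rinv_0_lt_compat; auto. auto.
  field_simplify; lra.
Qed.

Lemma mul_le1 a c : 0 <= a -> Rabs c <= 1 -> a * Rabs c <= a.
Proof. intros. rewrite <- (Rmult_1_r a) at 2. apply Rmult_le_compat_l; auto. Qed.
Lemma cos_le1 t : Rabs (cos t) <= 1.
Proof. apply Rabs_le; apply COS_bound. Qed.
Lemma sin_le1 t : Rabs (sin t) <= 1.
Proof. apply Rabs_le; apply SIN_bound. Qed.

Section FTderiv.
Variable p : R.
Hypothesis Hp : 1 < p.
Variable ph : R -> R.
Variable K0 : R.
Hypothesis Hc : forall x, continuous ph x.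
Hypothesis HD : forall x, (1 + x ^ 2) * Rabs (ph x) <= K0 * w p x.

Definition F0 v := IR (fun x => ph x * cos (x * v)).
Definition F1 v := IR (fun x => - (x * ph x * sin (x * v))).
Definition F2 v := IR (fun x => - (x ^ 2 * ph x * cos (x * v))).

Lemma absx_le x : Rabs x <= 1 + x ^ 2.
Proof. destruct (Rle_dec 0 x). rewrite Rabs_pos_eq; nra. rewrite Rabs_left1; nra. Qed.

Lemma ph_bd x : Rabs (ph x) <= K0 * w p x.
Proof. eapply Rle_trans. 2: apply HD. generalize (Rabs_pos (ph x)). nra. Qed.
Lemma xph_bd x : Rabs x * Rabs (ph x) <= K0 * w p x.
Proof. eapply Rle_trans. 2: apply HD. generalize (Rabs_pos (ph x)) (absx_le x). nra. Qed.
Lemma x2ph_bd x : x ^ 2 * Rabs (ph x) <= K0 * w p x.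
Proof. eapply Rle_trans. 2: apply HD. generalize (Rabs_pos (ph x)). nra. Qed.

Lemma d0 v : domw p (fun x => ph x * cos (x * v)) K0.
Proof.
  split. intros x; cont; auto.
  intros x. rewrite Rabs_mult. eapply Rle_trans. 2: apply ph_bd.
  apply mul_le1. apply Rabs_pos. apply cos_le1.
Qed.
Lemma ds v : domw p (fun x => ph x * sin (x * v)) K0.
Proof.
  split. intros x; cont; auto.
  intros x. rewrite Rabs_mult. eapply Rle_trans. 2: apply ph_bd.
  apply mul_le1. apply Rabs_pos. apply sin_le1.
Qed.
Lemma d1 v : domw p (fun x => - (x * ph x * sin (x * v))) K0.
Proof.
  split. intros x; cont; auto.
  intros x. rewrite Rabs_Ropp, !Rabs_mult. eapply Rle_trans. 2: apply xph_bd.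
  apply mul_le1. apply Rmult_le_pos; apply Rabs_pos. apply sin_le1.
Qed.
Lemma d2 v : domw p (fun x => - (x ^ 2 * ph x * cos (x * v))) K0.
Proof.
  split. intros x; cont; auto.
  intros x. rewrite Rabs_Ropp, !Rabs_mult. eapply Rle_trans. 2: apply x2ph_bd.
  rewrite (Rabs_pos_eq (x ^ 2)) by nra.
  apply mul_le1. apply Rmult_le_pos. nra. apply Rabs_pos. apply cos_le1.
Qed.

Lemma F0_deriv v : is_derive F0 v (F1 v).
Proof.
  apply is_derive_Reals. apply deriv_from_small.
  intros eps Heps.
  set (B := 2 * K0 * Tl p 0).
  assert (HB : 0 <= B).
  { unfold B. assert (0 <= K0) by (apply (K_nonneg p ph K0 ph_bd)).
    assert (0 <= Tl p 0) by (apply Tl_nonneg; lra). nra. }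
  exists (eps / (B + 1)). split. apply Rdiv_lt_0_compat; lra.
  intros h Hh.
  set (e := fun x => ph x * cos (x * (v + h)) + (-1) * (ph x * cos (x * v))
                     + (- h) * (- (x * ph x * sin (x * v)))).
  assert (He : domw p e (h ^ 2 * K0)).
  { split. intros x; unfold e; cont; auto.
    intros x. unfold e.
    replace (ph x * cos (x * (v + h)) + -1 * (ph x * cos (x * v)) + - h * - (x * ph x * sin (x * v)))
      with (ph x * (cos (x * v + x * h) - cos (x * v) + (x * h) * sin (x * v)))
      by (replace (x * (v + h)) with (x * v + x * h) by ring; ring).
    rewrite Rabs_mult. generalize (cos_taylor (x * v) (x * h)) (Rabs_pos (ph x)) (x2ph_bd x). intros.
    apply Rle_trans with (Rabs (ph x) * (x * h) ^ 2). apply Rmult_le_compat_l; auto.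
    replace (Rabs (ph x) * (x * h) ^ 2) with (h ^ 2 * (x ^ 2 * Rabs (ph x))) by ring.
    rewrite Rmult_assoc. apply Rmult_le_compat_l. nra. auto. }
  assert (E : F0 (v + h) - F0 v - h * F1 v = IR e).
  { unfold e, F0, F1.
    rewrite (IR_plus p Hp _ _ (K0 + Rabs (-1) * K0) (Rabs (- h) * K0)).
    rewrite (IR_plus p Hp _ _ K0 (Rabs (-1) * K0)).
    rewrite (IR_scal p Hp _ (-1) K0), (IR_scal p Hp _ (- h) K0). ring.
    all: try apply d0; try apply d1; try apply domw_scal; try apply d0; try apply d1.
    apply domw_plus. apply d0. apply domw_scal. apply d0. }
  rewrite E. eapply Rle_trans. apply (IR_abs p Hp e _ He).
  assert (Rabs h * B <= eps).
  { apply Rle_trans with (eps / (B + 1) * (B + 1)).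
    generalize (Rabs_pos h). intros. nra. right; field; lra. }
  replace (h ^ 2) with (Rabs h * Rabs h) by (rewrite <- Rabs_mult, Rabs_pos_eq; [ring | nra]).
  unfold B in H. generalize (Rabs_pos h). nra.
Qed.


Lemma F1_deriv v : is_derive F1 v (F2 v).
Proof.
  apply is_derive_Reals. apply deriv_from_small.
  intros eps Heps.
  assert (HK : 0 <= K0) by (apply (K_nonneg p ph K0 ph_bd)).
  destruct (Tl_small p Hp (eps / (8 * K0 + 1))) as [A [HA HAB]].
  { apply Rdiv_lt_0_compat; lra. }
  specialize (HAB A (Rle_refl A)).
  assert (HT : 4 * K0 * Tl p A <= eps / 2).
  { assert (0 <= Tl p A) by (apply Tl_nonneg; lra).
    apply Rle_trans with ((8 * K0 + 1) * Tl p A / 2). nra.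
    apply Rle_trans with ((8 * K0 + 1) * (eps / (8 * K0 + 1)) / 2).
    apply Rmult_le_compat_r. lra. apply Rmult_le_compat_l; lra. right; field; lra. }
  set (C := 2 * A * A * K0).
  assert (HC : 0 <= C) by (unfold C; nra).
  exists (eps / (2 * (C + 1))). split. apply Rdiv_lt_0_compat; lra.
  intros h Hh.
  set (e := fun x => - (x * ph x * sin (x * (v + h))) + (-1) * (- (x * ph x * sin (x * v)))
                     + (- h) * (- (x ^ 2 * ph x * cos (x * v)))).
  assert (Ee : forall x, e x = - (x * ph x) * (sin (x * v + x * h) - sin (x * v) - (x * h) * cos (x * v))).
  { intros x. unfold e. replace (x * (v + h)) with (x * v + x * h) by ring. ring. }
  assert (He : domw p e (2 * Rabs h * K0)).
  { split. intros x; unfold e; cont; auto.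
    intros x. rewrite Ee.
    rewrite Rabs_mult, Rabs_Ropp, Rabs_mult.
    assert (Rabs (sin (x * v + x * h) - sin (x * v) - x * h * cos (x * v)) <= 2 * (Rabs x * Rabs h)).
    { replace (sin (x * v + x * h) - sin (x * v) - x * h * cos (x * v)) with
        ((sin (x * v + x * h) - sin (x * v)) - x * h * cos (x * v)) by ring.
      eapply Rle_trans. apply Rabs_triang. rewrite Rabs_Ropp.
      generalize (sin_lip (x * v) (x * h)). rewrite !Rabs_mult. intros.
      generalize (cos_le1 (x * v)) (Rabs_pos x) (Rabs_pos h). intros.
      assert (Rabs x * Rabs h * Rabs (cos (x * v)) <= Rabs x * Rabs h) by (apply mul_le1; nra).
      lra. }
    generalize (Rabs_pos x) (Rabs_pos (ph x)) (Rabs_pos h) (x2ph_bd x). intros.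
    assert (x ^ 2 = Rabs x * Rabs x) by (rewrite <- Rabs_mult, Rabs_pos_eq; [ring|nra]).
    apply Rle_trans with (Rabs x * Rabs (ph x) * (2 * (Rabs x * Rabs h))).
    apply Rmult_le_compat_l; auto. nra.
    replace (Rabs x * Rabs (ph x) * (2 * (Rabs x * Rabs h))) with (2 * Rabs h * (x ^ 2 * Rabs (ph x))) by (rewrite H4; ring).
    rewrite (Rmult_assoc (2 * Rabs h)). apply Rmult_le_compat_l. nra. auto. }
  assert (E : F1 (v + h) - F1 v - h * F2 v = IR e).
  { unfold e, F1, F2.
    rewrite (IR_plus p Hp _ _ (K0 + Rabs (-1) * K0) (Rabs (- h) * K0)).
    rewrite (IR_plus p Hp _ _ K0 (Rabs (-1) * K0)).
    rewrite (IR_scal p Hp _ (-1) K0), (IR_scal p Hp _ (- h) K0). ring.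
    all: try apply d1; try apply d2; try apply domw_scal; try apply d1; try apply d2.
    apply domw_plus. apply d1. apply domw_scal. apply d1. }
  rewrite E.
  assert (Hin : Rabs (RInt e (- A) A) <= (A - - A) * (A * h ^ 2 * K0)).
  { apply abs_RInt_le_const. lra. apply ex_RInt_cont. apply He.
    intros x Hx. rewrite Ee. rewrite Rabs_mult, Rabs_Ropp, Rabs_mult.
    generalize (sin_taylor (x * v) (x * h)) (Rabs_pos x) (Rabs_pos (ph x)) (x2ph_bd x) (w_le1 p Hp x). intros.
    assert (Rabs x <= A) by (apply Rabs_le; lra).
    apply Rle_trans with (Rabs x * Rabs (ph x) * (x * h) ^ 2). apply Rmult_le_compat_l; nra.
    replace (Rabs x * Rabs (ph x) * (x * h) ^ 2) with (Rabs x * h ^ 2 * (x ^ 2 * Rabs (ph x))) by ring.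
    assert (x ^ 2 * Rabs (ph x) <= K0) by nra.
    assert (0 <= x ^ 2 * Rabs (ph x)) by nra.
    assert (0 <= h ^ 2) by nra.
    apply Rle_trans with (A * h ^ 2 * (x ^ 2 * Rabs (ph x))).
    apply Rmult_le_compat_r; auto. apply Rmult_le_compat_r; auto.
    apply Rmult_le_compat_l. nra. auto. }
  generalize (IR_bound p Hp e _ He A HA). intros Hout.
  assert (Hh2 : Rabs h * C <= eps / 2).
  { apply Rle_trans with (eps / (2 * (C + 1)) * C).
    apply Rmult_le_compat_r; lra.
    apply Rle_trans with (eps / (2 * (C + 1)) * (C + 1)). apply Rmult_le_compat_l.
    left; apply Rdiv_lt_0_compat; lra. lra. right; field; lra. }
  assert (h ^ 2 = Rabs h * Rabs h) by (rewrite <- Rabs_mult, Rabs_pos_eq; [ring|nra]).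
  generalize (Rabs_pos h). intros.
  assert (Rabs (IR e) <= Rabs (IR e - RInt e (- A) A) + Rabs (RInt e (- A) A)).
  { replace (IR e) with ((IR e - RInt e (- A) A) + RInt e (- A) A) at 1 by ring. apply Rabs_triang. }
  assert (2 * (2 * Rabs h * K0) * Tl p A <= Rabs h * (eps / 2)).
  { replace (2 * (2 * Rabs h * K0) * Tl p A) with (Rabs h * (4 * K0 * Tl p A)) by ring.
    apply Rmult_le_compat_l; auto. }
  assert ((A - - A) * (A * h ^ 2 * K0) = Rabs h * (Rabs h * C)).
  { rewrite H. unfold C. ring. }
  assert (Rabs h * (Rabs h * C) <= Rabs h * (eps / 2)) by (apply Rmult_le_compat_l; auto).
  lra.
Qed.

Lemma Derive_F0 v : Derive F0 v = F1 v.
Proof. apply is_derive_unique. apply F0_deriv. Qed.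

End FTderiv.


Lemma cos_decr x y : 0 <= x -> x <= y -> y <= PI -> cos y <= cos x.
Proof.
  intros. destruct (Req_dec x y). subst; lra.
  left. apply cos_decreasing_1; lra.
Qed.

Lemma RInt_lb_const (f : R -> R) a b c : a <= b -> (forall x, continuous f x) ->
  (forall x, a < x < b -> c <= f x) -> (b - a) * c <= RInt f a b.
Proof.
  intros Hab Hc H.
  assert (E : RInt (fun _ => c) a b = (b - a) * c) by (rewrite RInt_const; reflexivity).
  rewrite <- E. apply RInt_le; auto. apply ex_RInt_cont. intros; apply cont_const.
  apply ex_RInt_cont; auto.
Qed.

Lemma RInt_ext_R (f g : R -> R) a b : (forall x, f x = g x) -> RInt f a b = RInt g a b.
Proof. intros H. apply RInt_ext. intros; apply H. Qed.

Lemma bernoulli q n : 1 <= q -> 1 + INR n * (q - 1) <= q ^ n.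
Proof.
  intros Hq. induction n. simpl. lra.
  rewrite S_INR. simpl.
  assert (0 <= INR n) by apply pos_INR.
  assert (1 <= q ^ n) by (rewrite <- (pow1 n); apply pow_incr; lra).
  nra.
Qed.

Section FU.
Variable f : R -> R.
Variable u0 : R.
Hypothesis Hfc : forall x, continuous f x.

Definition cm (m : nat) (u : R) := cos (2 * PI * INR m * (u - u0)).

Lemma cm_cont m x : continuous (cm m) x.
Proof. unfold cm. cont. Qed.

Lemma cm_rec m u : cos (2 * PI * (u - u0)) * cm m u =
  / 2 * cm (S m) u + / 2 * cm (match m with O => 1%nat | S k => k end) u.
Proof.
  unfold cm.
  destruct m as [|k].
  - replace (2 * PI * INR 0 * (u - u0)) with 0 by (simpl; ring).
    replace (2 * PI * INR 1 * (u - u0)) with (2 * PI * (u - u0)) by (simpl; ring).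
    rewrite cos_0. field.
  - set (t := 2 * PI * (u - u0)).
    replace (2 * PI * INR (S (S k)) * (u - u0)) with (INR (S k) * t + t) by (unfold t; rewrite !S_INR; ring).
    replace (2 * PI * INR (S k) * (u - u0)) with (INR (S k) * t) by (unfold t; ring).
    replace (2 * PI * INR k * (u - u0)) with (INR (S k) * t - t) by (unfold t; rewrite S_INR; ring).
    rewrite cos_plus, cos_minus. field.
Qed.

Hypothesis Hcoef : forall m, RInt (fun u => f u * cm m u) (u0 - / 2) (u0 + / 2) = 0.

Variable kap : R.

Definition TT u := kap + cos (2 * PI * (u - u0)).

Lemma TT_cont x : continuous TT x.
Proof. unfold TT. cont. Qed.
Hint Resolve TT_cont cm_cont : core.

Lemma coef_pow n : forall m, RInt (fun u => f u * TT u ^ n * cm m u) (u0 - / 2) (u0 + / 2) = 0.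
Proof.
  induction n; intros m.
  - rewrite <- (Hcoef m). apply RInt_ext_R. intros; simpl; ring.
  - set (m' := match m with O => 1%nat | S k => k end).
    assert (Cg : forall k x, continuous (fun u => f u * TT u ^ n * cm k u) x).
    { intros k x. apply cont_mult. apply cont_mult. auto. apply cont_pow. apply TT_cont. apply cm_cont. }
    rewrite (RInt_ext_R _ (fun u => kap * (f u * TT u ^ n * cm m u)
        + (/2 * (f u * TT u ^ n * cm (S m) u) + / 2 * (f u * TT u ^ n * cm m' u)))).
    2:{ intros u. simpl. unfold m'. rewrite <- !Rmult_assoc.
        replace (/ 2 * f u * TT u ^ n * cm (S m) u + / 2 * f u * TT u ^ n * cm (match m with | 0%nat => 1%nat | S k => k end) u)
          with (f u * TT u ^ n * (/ 2 * cm (S m) u + / 2 * cm (match m with | 0%nat => 1%nat | S k => k end) u)) by ring.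
        rewrite <- cm_rec. unfold TT. ring. }
    rewrite (RInt_plus (V := R_CompleteNormedModule)).
    rewrite (RInt_plus (V := R_CompleteNormedModule)).
    rewrite !RInt_scal_R by auto.
    rewrite !IHn. unfold plus; simpl. ring.
    all: try (apply ex_RInt_cont; intros; auto; fail).
    all: apply ex_RInt_cont; intros; cont; auto.
Qed.

End FU.

Lemma cont_eps (f : R -> R) x eps : continuous f x -> 0 < eps ->
  exists d, 0 < d /\ forall y, Rabs (y - x) < d -> Rabs (f y - f x) < eps.
Proof.
  intros H He. apply continuity_pt_filterlim in H.
  destruct (H eps He) as [d [Hd Hy]].
  exists d. split; auto. intros y Hy'.
  destruct (Req_dec y x). subst. rewrite Rminus_diag, Rabs_R0. auto.
  apply (Hy y). split. split. exact I. auto. exact Hy'.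
Qed.

Lemma fourier_pos (f : R -> R) u0 : (forall x, continuous f x) ->
  (forall m, RInt (fun u => f u * cm u0 m u) (u0 - / 2) (u0 + / 2) = 0) -> ~ (0 < f u0).
Proof.
  intros Hfc Hcoef Hpos.
  destruct (cont_eps f u0 (f u0 / 2) (Hfc u0)) as [d0 [Hd0 Hd0f]]. lra.
  set (d := Rmin (d0 / 2) (/ 4)).
  assert (Hd : 0 < d) by (unfold d; apply Rmin_glb_lt; lra).
  assert (Hd4 : d <= / 4) by (unfold d; apply Rmin_r).
  assert (Hdd0 : d < d0) by (unfold d; generalize (Rmin_l (d0/2) (/4)); lra).
  assert (Hfnear : forall u, Rabs (u - u0) <= d -> f u0 / 2 < f u).
  { intros u Hu. specialize (Hd0f u ltac:(lra)). apply Rabs_def2 in Hd0f. lra. }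
  assert (HPI : 3 < PI) by (generalize PI2_3_2; lra).
  set (kap := 1 - cos (2 * PI * d)).
  assert (Hk : 0 < kap).
  { unfold kap. assert (cos (2 * PI * d) < cos 0).
    { apply cos_decreasing_1; nra. }
    rewrite cos_0 in H. lra. }
  assert (Hk2 : kap <= 2) by (unfold kap; generalize (COS_bound (2 * PI * d)); lra).
  set (q := kap + cos (PI * d)).
  assert (Hq : 1 < q).
  { unfold q, kap. assert (cos (2 * PI * d) < cos (PI * d)) by (apply cos_decreasing_1; nra). lra. }
  assert (cosabs : forall t, cos t = cos (Rabs t)).
  { intros t. destruct (Rle_dec 0 t). rewrite Rabs_pos_eq; auto. rewrite Rabs_left1 by lra. rewrite cos_neg; auto. }
  assert (Tfar : forall u, d <= Rabs (u - u0) <= / 2 -> Rabs (TT u0 kap u) <= 1).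
  { intros u Hu. unfold TT. rewrite cosabs, Rabs_mult, (Rabs_pos_eq (2 * PI)) by lra.
    assert (cos (2 * PI * Rabs (u - u0)) <= cos (2 * PI * d)) by (apply cos_decr; nra).
    generalize (COS_bound (2 * PI * Rabs (u - u0))). intros. apply Rabs_le. unfold kap in *. lra. }
  assert (Tnear : forall u, Rabs (u - u0) <= d -> 1 <= TT u0 kap u).
  { intros u Hu. unfold TT. rewrite cosabs, Rabs_mult, (Rabs_pos_eq (2 * PI)) by lra.
    assert (cos (2 * PI * d) <= cos (2 * PI * Rabs (u - u0))).
    { apply cos_decr. generalize (Rabs_pos (u - u0)). nra. nra. nra. }
    unfold kap. lra. }
  assert (Tnear2 : forall u, Rabs (u - u0) <= d / 2 -> q <= TT u0 kap u).
  { intros u Hu. unfold TT. rewrite cosabs, Rabs_mult, (Rabs_pos_eq (2 * PI)) by lra.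
    assert (cos (PI * d) <= cos (2 * PI * Rabs (u - u0))).
    { apply cos_decr. generalize (Rabs_pos (u - u0)). nra. nra. nra. }
    unfold q. lra. }
  assert (Hz : forall n, RInt (fun u => f u * TT u0 kap u ^ n) (u0 - / 2) (u0 + / 2) = 0).
  { intros n. rewrite <- (coef_pow f u0 Hfc Hcoef kap n 0).
    apply RInt_ext_R. intros u. unfold cm. simpl. rewrite Rmult_0_r, Rmult_0_l, cos_0. ring. }
  set (g := fun n u => f u * TT u0 kap u ^ n).
  assert (Hgc : forall n x, continuous (g n) x).
  { intros n x. unfold g. apply cont_mult. auto. apply cont_pow. apply TT_cont. }
  set (B1 := RInt (fun u => Rabs (f u)) (u0 - / 2) (u0 - d)).
  set (B2 := RInt (fun u => Rabs (f u)) (u0 + d) (u0 + / 2)).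
  assert (Hbd : forall n, d * (f u0 / 2) * q ^ n <= B1 + B2).
  { intros n.
    assert (Hs : RInt (g n) (u0 - / 2) (u0 + / 2) =
      RInt (g n) (u0 - / 2) (u0 - d) + RInt (g n) (u0 - d) (u0 - d / 2)
      + RInt (g n) (u0 - d / 2) (u0 + d / 2) + RInt (g n) (u0 + d / 2) (u0 + d)
      + RInt (g n) (u0 + d) (u0 + / 2)).
    { rewrite !RInt_Chasles_R; auto. }
    assert (Hn0 : RInt (g n) (u0 - / 2) (u0 + / 2) = 0) by apply Hz.
    assert (Tpow : forall x, d <= Rabs (x - u0) <= / 2 -> Rabs (TT u0 kap x) ^ n <= 1).
    { intros x Hx. rewrite <- (pow1 n). apply pow_incr. split. apply Rabs_pos. auto. }
    assert (A1 : - B1 <= RInt (g n) (u0 - / 2) (u0 - d)).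
    { assert (Rabs (RInt (g n) (u0 - / 2) (u0 - d)) <= B1).
      { apply RInt_abs_le. lra. auto. intros; apply continuous_Rabs_comp; auto.
        intros x Hx. unfold g. rewrite Rabs_mult, <- RPow_abs.
        assert (Rabs (TT u0 kap x) ^ n <= 1).
        { apply Tpow. rewrite Rabs_left1 by lra. lra. }
        generalize (Rabs_pos (f x)) (pow_le (Rabs (TT u0 kap x)) n (Rabs_pos _)). nra. }
      assert (- RInt (g n) (u0 - / 2) (u0 - d) <= Rabs (RInt (g n) (u0 - / 2) (u0 - d))).
      { rewrite <- Rabs_Ropp. apply Rle_abs. }
      lra. }
    assert (A5 : - B2 <= RInt (g n) (u0 + d) (u0 + / 2)).
    { assert (Rabs (RInt (g n) (u0 + d) (u0 + / 2)) <= B2).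
      { apply RInt_abs_le. lra. auto. intros; apply continuous_Rabs_comp; auto.
        intros x Hx. unfold g. rewrite Rabs_mult, <- RPow_abs.
        assert (Rabs (TT u0 kap x) ^ n <= 1).
        { apply Tpow. rewrite Rabs_pos_eq by lra. lra. }
        generalize (Rabs_pos (f x)) (pow_le (Rabs (TT u0 kap x)) n (Rabs_pos _)). nra. }
      assert (- RInt (g n) (u0 + d) (u0 + / 2) <= Rabs (RInt (g n) (u0 + d) (u0 + / 2))).
      { rewrite <- Rabs_Ropp. apply Rle_abs. }
      lra. }
    assert (Gnn : forall x, Rabs (x - u0) <= d -> 0 <= g n x).
    { intros x Hx. unfold g. apply Rmult_le_pos. generalize (Hfnear x Hx). lra.
      apply pow_le. generalize (Tnear x Hx). lra. }
    assert (A2 : 0 <= RInt (g n) (u0 - d) (u0 - d / 2)).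
    { apply RInt_ge_0. lra. apply ex_RInt_cont; auto.
      intros x Hx. apply Gnn. rewrite Rabs_left1 by lra. lra. }
    assert (A4 : 0 <= RInt (g n) (u0 + d / 2) (u0 + d)).
    { apply RInt_ge_0. lra. apply ex_RInt_cont; auto.
      intros x Hx. apply Gnn. rewrite Rabs_pos_eq by lra. lra. }
    assert (A3 : (u0 + d / 2 - (u0 - d / 2)) * (f u0 / 2 * q ^ n) <= RInt (g n) (u0 - d / 2) (u0 + d / 2)).
    { apply RInt_lb_const. lra. auto.
      intros x Hx. unfold g.
      assert (Hx2 : Rabs (x - u0) <= d / 2) by (apply Rabs_le; lra).
      generalize (Hfnear x ltac:(lra)) (Tnear2 x Hx2). intros.
      assert (q ^ n <= TT u0 kap x ^ n) by (apply pow_incr; lra).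
      assert (0 <= q ^ n) by (apply pow_le; lra).
      apply Rmult_le_compat; lra. }
    replace (u0 + d / 2 - (u0 - d / 2)) with d in A3 by field.
    lra. }
  set (c := d * (f u0 / 2)).
  assert (Hc : 0 < c) by (unfold c; nra).
  destruct (INR_unbounded ((B1 + B2) / (c * (q - 1)))) as [n Hn].
  specialize (Hbd n). fold c in Hbd.
  generalize (bernoulli q n ltac:(lra)). intros Hb.
  assert (HB : B1 + B2 < c * (INR n * (q - 1))).
  { apply Rmult_lt_compat_r with (r := c * (q - 1)) in Hn. 2: nra.
    replace ((B1 + B2) / (c * (q - 1)) * (c * (q - 1))) with (B1 + B2) in Hn by (field; nra).
    nra. }
  assert (0 <= INR n) by apply pos_INR.
  nra.
Qed.

Lemma fourier_unique (f : R -> R) u0 : (forall x, continuous f x) ->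
  (forall m, RInt (fun u => f u * cm u0 m u) (u0 - / 2) (u0 + / 2) = 0) -> f u0 = 0.
Proof.
  intros Hc Hco.
  destruct (Rtotal_order (f u0) 0) as [Hl|[He|Hg]]; auto.
  - exfalso. apply (fourier_pos (fun x => - f x) u0).
    intros; apply cont_opp; auto.
    intros m. rewrite (RInt_ext_R _ (fun u => (-1) * (f u * cm u0 m u))) by (intros; ring).
    rewrite RInt_scal_R by (intros x; apply cont_mult; auto; apply cm_cont).
    rewrite Hco. apply Rmult_0_r.
    lra.
  - exfalso. apply (fourier_pos f u0); auto.
Qed.


Lemma eps_cont (f : R -> R) x :
  (forall eps, 0 < eps -> exists d, 0 < d /\ forall y, Rabs (y - x) < d -> Rabs (f y - f x) < eps) ->
  continuous f x.
Proof.
  intros H. apply continuity_pt_filterlim.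
  intros eps He. destruct (H eps He) as [d [Hd Hy]].
  exists d. split; auto. intros y [_ Hy']. apply Hy. exact Hy'.
Qed.

Section Series.
Variable p : R.
Hypothesis Hp : 1 < p.

Lemma w_le_Tl s : 1 <= s -> w p s <= Tl p (s - 1) - Tl p s.
Proof.
  intros Hs.
  rewrite <- (is_RInt_unique _ _ _ _ (w_int_pos p Hp (s - 1) s ltac:(lra))).
  replace (w p s) with ((s - (s - 1)) * w p s) by ring.
  apply RInt_lb_const. lra. apply w_cont.
  intros x Hx. apply (w_dec p Hp). lra.
Qed.

Variable a : nat -> R.
Variable K c : R.
Hypothesis Hc : 0 <= c.
Hypothesis Ha : forall n, c <= INR n -> Rabs (a n) <= K * w p (INR n - c).

Lemma K_nn : 0 <= K.
Proof.
  destruct (INR_unbounded c) as [n Hn].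
  generalize (Ha n ltac:(lra)) (w_pos p (INR n - c)) (Rabs_pos (a n)). nra.
Qed.

Lemma snm_bound k : forall n, 1 <= INR n - c ->
  Rabs (sum_n_m a n (n + k)) <= K * (Tl p (INR n - 1 - c) - Tl p (INR (n + k) - c)).
Proof.
  induction k; intros n Hn.
  - rewrite Nat.add_0_r, sum_n_n.
    eapply Rle_trans. apply Ha. lra.
    apply Rmult_le_compat_l. apply K_nn.
    replace (INR n - 1 - c) with ((INR n - c) - 1) by ring. apply w_le_Tl. lra.
  - rewrite Nat.add_succ_r, sum_n_Sm by lia.
    change (plus (sum_n_m a n (n + k)) (a (S (n + k)))) with (sum_n_m a n (n + k) + a (S (n + k))).
    eapply Rle_trans. apply Rabs_triang.
    assert (HI : INR (S (n + k)) = INR (n + k) + 1) by apply S_INR.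
    assert (INR n <= INR (n + k)) by (apply le_INR; lia).
    generalize (IHk n Hn). intros X.
    assert (Y : Rabs (a (S (n + k))) <= K * (Tl p (INR (n + k) - c) - Tl p (INR (S (n + k)) - c))).
    { eapply Rle_trans. apply Ha. lra.
      apply Rmult_le_compat_l. apply K_nn.
      replace (INR (n + k) - c) with ((INR (S (n + k)) - c) - 1) by (rewrite HI; ring).
      apply w_le_Tl. lra. }
    rewrite Rmult_minus_distr_l in *. lra.
Qed.

Lemma snm_bound2 n m : 1 <= INR n - c -> Rabs (sum_n_m a n m) <= K * Tl p (INR n - 1 - c).
Proof.
  intros Hn. destruct (le_lt_dec n m) as [Hnm|Hnm].
  - replace m with (n + (m - n))%nat by lia.
    eapply Rle_trans. apply snm_bound; auto.
    apply Rmult_le_compat_l. apply K_nn.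
    assert (0 <= Tl p (INR (n + (m - n)) - c)) by (apply Tl_nonneg; auto; assert (INR n <= INR (n + (m - n))) by (apply le_INR; lia); lra).
    lra.
  - rewrite sum_n_m_zero by lia. unfold zero; simpl. rewrite Rabs_R0.
    apply Rmult_le_pos. apply K_nn. apply Tl_nonneg; auto. lra.
Qed.

Lemma ser_ex : ex_series a.
Proof.
  apply (@ex_series_Cauchy R_AbsRing R_CompleteNormedModule). intros eps.
  destruct (Tl_small p Hp (eps / (K + 1))) as [A [HA HB]].
  { apply Rdiv_lt_0_compat. apply cond_pos. generalize K_nn; lra. }
  destruct (INR_unbounded (A + 1 + c + 1)) as [N HN].
  exists N. intros n m Hn Hm.
  assert (INR N <= INR n) by (apply le_INR; lia).
  unfold norm; simpl. unfold abs; simpl.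
  eapply Rle_lt_trans. apply snm_bound2. lra.
  assert (Tl p (INR n - 1 - c) < eps / (K + 1)) by (apply HB; lra).
  assert (0 <= Tl p (INR n - 1 - c)) by (apply Tl_nonneg; auto; lra).
  generalize K_nn. intros.
  apply Rle_lt_trans with ((K + 1) * Tl p (INR n - 1 - c)). nra.
  replace (pos eps) with ((K + 1) * (eps / (K + 1))) by (field; lra).
  apply Rmult_lt_compat_l; lra.
Qed.

Lemma ser_tail N : c <= INR N -> Rabs (Series a - sum_n a N) <= K * Tl p (INR N - c).
Proof.
  intros HN.
  generalize (Series_correct a ser_ex). intros Hs.
  assert (Hl : is_lim_seq (sum_n a) (Series a)) by exact Hs.
  apply is_lim_seq_Reals in Hl.
  destruct (Rle_dec (Rabs (Series a - sum_n a N)) (K * Tl p (INR N - c))) as [H|H]; auto.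
  exfalso. apply Rnot_le_lt in H.
  destruct (Hl (Rabs (Series a - sum_n a N) - K * Tl p (INR N - c))) as [M HM]. lra.
  specialize (HM (max M (S N)) ltac:(lia)). unfold R_dist in HM.
  assert (E : sum_n a (max M (S N)) - sum_n a N = sum_n_m a (S N) (max M (S N))).
  { symmetry. apply (sum_n_m_sum_n (G := R_AbelianGroup) a N (max M (S N))). lia. }
  assert (B : Rabs (sum_n_m a (S N) (max M (S N))) <= K * Tl p (INR (S N) - 1 - c)).
  { apply snm_bound2. rewrite S_INR. lra. }
  rewrite S_INR in B. replace (INR N + 1 - 1 - c) with (INR N - c) in B by ring.
  rewrite <- E in B.
  generalize (Rabs_triang (Series a - sum_n a (max M (S N))) (sum_n a (max M (S N)) - sum_n a N)).
  replace (Series a - sum_n a (max M (S N)) + (sum_n a (max M (S N)) - sum_n a N))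
    with (Series a - sum_n a N) by ring.
  rewrite Rabs_minus_sym in HM. lra.
Qed.

End Series.

Section Poisson.
Variable p : R.
Hypothesis Hp : 1 < p.
Variable g : R -> R.
Variable K : R.
Hypothesis Hg : domw p g K.

Definition sa u n := g (u - INR n).
Definition sb u n := g (u + INR n + 1).
Definition Pg u := Series (sa u) + Series (sb u).
Definition PN N u := sum_n (sa u) N + sum_n (sb u) N.

Lemma Kg_nn : 0 <= K.
Proof. destruct Hg as [_ Hb]. apply (K_nonneg p g K Hb). Qed.

Lemma w_abs x : w p (Rabs x) = w p x.
Proof. unfold w. rewrite Rabs_Rabsolu. auto. Qed.

Lemma sa_bd R u : Rabs u <= R -> forall n, R <= INR n -> Rabs (sa u n) <= K * w p (INR n - R).
Proof.
  intros Hu n Hn. destruct Hg as [_ Hb]. unfold sa.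
  eapply Rle_trans. apply Hb. apply Rmult_le_compat_l. apply Kg_nn.
  rewrite <- w_abs. apply (w_dec p Hp).
  split. lra. rewrite Rabs_minus_sym.
  generalize (Rabs_triang_inv (INR n) u). rewrite (Rabs_pos_eq (INR n)) by apply pos_INR. lra.
Qed.

Lemma sb_bd R u : Rabs u <= R -> forall n, R <= INR n -> Rabs (sb u n) <= K * w p (INR n - R).
Proof.
  intros Hu n Hn. destruct Hg as [_ Hb]. unfold sb.
  eapply Rle_trans. apply Hb. apply Rmult_le_compat_l. apply Kg_nn.
  rewrite <- w_abs. apply (w_dec p Hp).
  split. lra. replace (u + INR n + 1) with ((INR n + 1) - - u) by ring.
  generalize (Rabs_triang_inv (INR n + 1) (- u)). rewrite Rabs_Ropp.
  rewrite (Rabs_pos_eq (INR n + 1)) by (generalize (pos_INR n); lra). lra.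
Qed.

Lemma sa_ex u : ex_series (sa u).
Proof. apply (ser_ex p Hp (sa u) K (Rabs u)). apply sa_bd. lra. Qed.
Lemma sb_ex u : ex_series (sb u).
Proof. apply (ser_ex p Hp (sb u) K (Rabs u)). apply sb_bd. lra. Qed.

Lemma P_approx R u N : Rabs u <= R -> R <= INR N -> Rabs (Pg u - PN N u) <= 2 * K * Tl p (INR N - R).
Proof.
  intros Hu HN.
  assert (HR : 0 <= R) by (generalize (Rabs_pos u); lra).
  generalize (ser_tail p Hp (sa u) K R (sa_bd R u Hu) N HN)
             (ser_tail p Hp (sb u) K R (sb_bd R u Hu) N HN). intros X Y.
  unfold Pg, PN.
  replace (Series (sa u) + Series (sb u) - (sum_n (sa u) N + sum_n (sb u) N))
    with ((Series (sa u) - sum_n (sa u) N) + (Series (sb u) - sum_n (sb u) N)) by ring.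
  eapply Rle_trans. apply Rabs_triang. lra.
Qed.

Lemma sum_cont (F : nat -> R -> R) N x : (forall n, continuous (F n) x) ->
  continuous (fun u => sum_n (fun n => F n u) N) x.
Proof.
  intros H. induction N.
  - apply (continuous_ext (F 0%nat)). intros; rewrite sum_O; auto. auto.
  - apply (continuous_ext (fun u => sum_n (fun n => F n u) N + F (S N) u)).
    intros; rewrite sum_Sn; auto. apply cont_plus; auto.
Qed.

Lemma PN_cont N x : continuous (PN N) x.
Proof.
  destruct Hg as [Hc _].
  unfold PN. apply cont_plus.
  - apply (sum_cont (fun n u => g (u - INR n))). intros n.
    apply (continuous_comp (fun u => u - INR n) g). cont. apply Hc.
  - apply (sum_cont (fun n u => g (u + INR n + 1))). intros n.
    apply (continuous_comp (fun u => u + INR n + 1) g). cont. apply Hc.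
Qed.

Lemma Tl_small2 eps : 0 < eps -> exists B, forall t, B <= t -> 2 * K * Tl p t < eps.
Proof.
  intros He. destruct (Tl_small p Hp (eps / (2 * K + 1))) as [A [HA HB]].
  apply Rdiv_lt_0_compat. lra. generalize Kg_nn; lra.
  exists A. intros t Ht. specialize (HB t Ht).
  assert (0 <= Tl p t) by (apply Tl_nonneg; auto; lra).
  generalize Kg_nn; intros.
  apply Rle_lt_trans with ((2 * K + 1) * Tl p t). nra.
  replace eps with ((2 * K + 1) * (eps / (2 * K + 1))) by (field; lra).
  apply Rmult_lt_compat_l; lra.
Qed.

Lemma P_cont x : continuous Pg x.
Proof.
  apply eps_cont. intros eps He.
  set (R := Rabs x + 1).
  destruct (Tl_small2 (eps / 3)) as [B HB]. lra.
  destruct (INR_unbounded (Rmax B 0 + R)) as [N HN].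
  generalize (Rmax_l B 0) (Rmax_r B 0). intros.
  assert (HR : 0 <= R) by (unfold R; generalize (Rabs_pos x); lra).
  assert (HT : 2 * K * Tl p (INR N - R) < eps / 3) by (apply HB; lra).
  destruct (cont_eps (PN N) x (eps / 3) (PN_cont N x)) as [d [Hd Hdd]]. lra.
  exists (Rmin d 1). split. apply Rmin_glb_lt; lra.
  intros y Hy.
  generalize (Rmin_l d 1) (Rmin_r d 1). intros.
  assert (Hyr : Rabs y <= R).
  { unfold R. generalize (Rabs_triang_inv y x). lra. }
  assert (Hxr : Rabs x <= R) by (unfold R; lra).
  generalize (P_approx R y N Hyr ltac:(lra)) (P_approx R x N Hxr ltac:(lra)) (Hdd y ltac:(lra)).
  intros X Y Z.
  replace (Pg y - Pg x) with (((Pg y - PN N y) + (PN N y - PN N x)) + - (Pg x - PN N x)) by ring.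
  generalize (Rabs_triang ((Pg y - PN N y) + (PN N y - PN N x)) (- (Pg x - PN N x)))
    (Rabs_triang (Pg y - PN N y) (PN N y - PN N x)). rewrite Rabs_Ropp. lra.
Qed.


Lemma sa_sum_cont N x : continuous (fun u => sum_n (sa u) N) x.
Proof.
  destruct Hg as [Hc _].
  apply (sum_cont (fun n u => g (u - INR n))). intros n.
  apply (continuous_comp (fun u => u - INR n) g). cont. apply Hc.
Qed.
Lemma sb_sum_cont N x : continuous (fun u => sum_n (sb u) N) x.
Proof.
  destruct Hg as [Hc _].
  apply (sum_cont (fun n u => g (u + INR n + 1))). intros n.
  apply (continuous_comp (fun u => u + INR n + 1) g). cont. apply Hc.
Qed.

Lemma small_eq x y : (forall eps, 0 < eps -> Rabs (x - y) < eps) -> x = y.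
Proof.
  intros H. destruct (Req_dec x y); auto. exfalso.
  assert (0 < Rabs (x - y)) by (apply Rabs_pos_lt; lra).
  specialize (H _ H1). lra.
Qed.

Section WithH.
Variable h : R -> R.
Hypothesis Hhc : forall x, continuous h x.
Hypothesis Hhp : forall x n, h (x + INR n) = h x.
Hypothesis Hhb : forall x, Rabs (h x) <= 1.

Definition gh x := g x * h x.

Lemma gh_cont x : continuous gh x.
Proof. destruct Hg as [Hc _]. unfold gh. apply cont_mult; auto. Qed.

Lemma gh_dom : domw p gh K.
Proof.
  destruct Hg as [Hc Hb]. split. apply gh_cont.
  intros x. unfold gh. rewrite Rabs_mult. eapply Rle_trans. 2: apply (Hb x).
  generalize (Rabs_pos (g x)) (Hhb x) (Rabs_pos (h x)). nra.
Qed.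

Lemma shift_a n a b : RInt (fun u => g (u - INR n) * h u) a b = RInt gh (a - INR n) (b - INR n).
Proof.
  rewrite (RInt_ext_R _ (fun y => scal 1 (gh (1 * y + - INR n)))).
  - etransitivity. apply (RInt_comp_lin (V := R_CompleteNormedModule) gh 1 (- INR n) a b).
    apply ex_RInt_cont. apply gh_cont. f_equal; ring.
  - intros y. unfold scal; simpl; unfold mult; simpl. unfold gh.
    replace (1 * y + - INR n) with (y - INR n) by ring.
    rewrite <- (Hhp (y - INR n) n). replace (y - INR n + INR n) with y by ring. ring.
Qed.

Lemma shift_b n a b : RInt (fun u => g (u + INR n + 1) * h u) a b = RInt gh (a + INR n + 1) (b + INR n + 1).
Proof.
  rewrite (RInt_ext_R _ (fun y => scal 1 (gh (1 * y + (INR n + 1))))).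
  - etransitivity. apply (RInt_comp_lin (V := R_CompleteNormedModule) gh 1 (INR n + 1) a b).
    apply ex_RInt_cont. apply gh_cont. f_equal; ring.
  - intros y. unfold scal; simpl; unfold mult; simpl. unfold gh.
    replace (1 * y + (INR n + 1)) with (y + INR n + 1) by ring.
    replace (y + INR n + 1) with (y + INR (S n)) by (rewrite S_INR; ring).
    rewrite (Hhp y (S n)). ring.
Qed.

Lemma int_sa N a : RInt (fun u => sum_n (sa u) N * h u) a (a + 1) = RInt gh (a - INR N) (a + 1).
Proof.
  induction N.
  - rewrite (RInt_ext_R _ (fun u => g (u - INR 0) * h u)) by (intros; rewrite sum_O; reflexivity).
    rewrite shift_a. rewrite INR_0. f_equal; ring.
  - rewrite (RInt_ext_R _ (fun u => sum_n (sa u) N * h u + g (u - INR (S N)) * h u))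
      by (intros; rewrite sum_Sn; unfold plus, sa; simpl; ring).
    rewrite (RInt_plus (V := R_CompleteNormedModule)).
    2: apply ex_RInt_cont; intros; apply cont_mult; auto; apply sa_sum_cont.
    2: apply ex_RInt_cont; intros; apply cont_mult; auto; apply (continuous_comp (fun u => u - INR (S N)) g); [cont | apply Hg].
    rewrite IHN, shift_a, S_INR. unfold plus; simpl.
    replace (a + 1 - (INR N + 1)) with (a - INR N) by ring.
    rewrite Rplus_comm. apply RInt_Chasles_R. apply gh_cont.
Qed.

Lemma int_sb N a : RInt (fun u => sum_n (sb u) N * h u) a (a + 1) = RInt gh (a + 1) (a + INR N + 2).
Proof.
  induction N.
  - rewrite (RInt_ext_R _ (fun u => g (u + INR 0 + 1) * h u)) by (intros; rewrite sum_O; reflexivity).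
    rewrite shift_b. rewrite INR_0. f_equal; ring.
  - rewrite (RInt_ext_R _ (fun u => sum_n (sb u) N * h u + g (u + INR (S N) + 1) * h u))
      by (intros; rewrite sum_Sn; unfold plus, sb; simpl; ring).
    rewrite (RInt_plus (V := R_CompleteNormedModule)).
    2: apply ex_RInt_cont; intros; apply cont_mult; auto; apply sb_sum_cont.
    2: apply ex_RInt_cont; intros; apply cont_mult; auto; apply (continuous_comp (fun u => u + INR (S N) + 1) g); [cont | apply Hg].
    rewrite IHN, shift_b, S_INR. unfold plus; simpl.
    replace (a + (INR N + 1) + 1) with (a + INR N + 2) by ring.
    replace (a + 1 + (INR N + 1) + 1) with (a + (INR N + 1) + 2) by ring.
    apply RInt_Chasles_R. apply gh_cont.
Qed.

Lemma int_PN N a : RInt (fun u => PN N u * h u) a (a + 1) = RInt gh (a - INR N) (a + INR N + 2).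
Proof.
  unfold PN.
  rewrite (RInt_ext_R _ (fun u => sum_n (sa u) N * h u + sum_n (sb u) N * h u)) by (intros; ring).
  rewrite (RInt_plus (V := R_CompleteNormedModule)).
  2: apply ex_RInt_cont; intros; apply cont_mult; auto; apply sa_sum_cont.
  2: apply ex_RInt_cont; intros; apply cont_mult; auto; apply sb_sum_cont.
  rewrite int_sa, int_sb. unfold plus; simpl. apply RInt_Chasles_R. apply gh_cont.
Qed.

Lemma int_P a : RInt (fun u => Pg u * h u) a (a + 1) = IR gh.
Proof.
  destruct gh_dom as [Hc Hb].
  apply small_eq. intros eps He.
  destruct (Tl_small2 (eps / 3)) as [B HB]. lra.
  set (R := Rabs a + 1).
  destruct (INR_unbounded (Rmax B 0 + R)) as [N HN].
  generalize (Rmax_l B 0) (Rmax_r B 0). intros.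
  assert (HR : 0 <= R) by (unfold R; generalize (Rabs_pos a); lra).
  assert (HT : 2 * K * Tl p (INR N - R) < eps / 3) by (apply HB; lra).
  assert (X1 : Rabs (RInt (fun u => Pg u * h u) a (a + 1) - RInt (fun u => PN N u * h u) a (a + 1))
               <= (a + 1 - a) * (2 * K * Tl p (INR N - R))).
  { rewrite <- (RInt_minus (V := R_CompleteNormedModule)).
    apply abs_RInt_le_const. lra.
    apply ex_RInt_cont. intros; apply cont_minus; apply cont_mult; auto; [apply P_cont | apply PN_cont].
    intros t Ht. unfold minus, plus, opp; simpl.
    replace (Pg t * h t + - (PN N t * h t)) with ((Pg t - PN N t) * h t) by ring.
    rewrite Rabs_mult.
    assert (Rabs t <= R) by (unfold R; apply Rabs_le; generalize (Rle_abs a) (Rle_abs (- a)); rewrite Rabs_Ropp; lra).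
    generalize (P_approx R t N H1 ltac:(lra)) (Hhb t) (Rabs_pos (h t)) (Rabs_pos (Pg t - PN N t)). nra.
    apply ex_RInt_cont. intros; apply cont_mult; auto; apply P_cont.
    apply ex_RInt_cont. intros; apply cont_mult; auto; apply PN_cont. }
  rewrite int_PN in X1.
  set (A := INR N - Rabs a).
  assert (HA : 0 <= A) by (unfold A, R in *; lra).
  assert (X2 := mid_approx p Hp gh K Hc Hb (a - INR N) (a + INR N + 2) A).
  assert (X3 := IR_bound p Hp gh K gh_dom A HA).
  assert (HTA : Tl p A <= Tl p (INR N - R)) by (apply Tl_dec; auto; unfold A, R in *; lra).
  generalize Kg_nn. intros.
  assert (X2' : Rabs (RInt gh (a - INR N) (a + INR N + 2) - RInt gh (- A) A) <= 2 * K * Tl p A).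
  { apply X2. unfold A; generalize (Rle_abs a); lra. auto.
    unfold A; generalize (Rle_abs (- a)); rewrite Rabs_Ropp; generalize (pos_INR N); lra. }
  replace (a + 1 - a) with 1 in X1 by ring.
  replace (RInt (fun u => Pg u * h u) a (a + 1) - IR gh) with
    ((RInt (fun u => Pg u * h u) a (a + 1) - RInt gh (a - INR N) (a + INR N + 2))
     + (RInt gh (a - INR N) (a + INR N + 2) - RInt gh (- A) A) + - (IR gh - RInt gh (- A) A)) by ring.
  assert (2 * K * Tl p A <= 2 * K * Tl p (INR N - R)) by (apply Rmult_le_compat_l; nra).
  generalize (Rabs_triang ((RInt (fun u => Pg u * h u) a (a + 1) - RInt gh (a - INR N) (a + INR N + 2))
     + (RInt gh (a - INR N) (a + INR N + 2) - RInt gh (- A) A)) (- (IR gh - RInt gh (- A) A)))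
    (Rabs_triang (RInt (fun u => Pg u * h u) a (a + 1) - RInt gh (a - INR N) (a + INR N + 2))
     (RInt gh (a - INR N) (a + INR N + 2) - RInt gh (- A) A)).
  rewrite Rabs_Ropp. lra.
Qed.

End WithH.

End Poisson.


Lemma sin_nPI m : sin (INR m * PI) = 0.
Proof.
  induction m. simpl. rewrite Rmult_0_l. apply sin_0.
  rewrite S_INR. replace ((INR m + 1) * PI) with (INR m * PI + PI) by ring.
  rewrite neg_sin, IHm. ring.
Qed.

Lemma int_cm u0 m : RInt (cm u0 m) (u0 - / 2) (u0 + / 2) = match m with O => 1 | S _ => 0 end.
Proof.
  destruct m as [|k].
  - rewrite (RInt_ext_R _ (fun _ => 1)). rewrite RInt_const. unfold scal; simpl; unfold mult; simpl. field.
    intros x. unfold cm. simpl. rewrite Rmult_0_r, Rmult_0_l. apply cos_0.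
  - set (c := 2 * PI * INR (S k)).
    assert (Hc : 0 < c).
    { unfold c. generalize PI_RGT_0 (lt_0_INR (S k) ltac:(lia)). intros. nra. }
    apply is_RInt_unique.
    replace 0 with (minus ((fun u => sin (c * (u - u0)) / c) (u0 + / 2)) ((fun u => sin (c * (u - u0)) / c) (u0 - / 2))).
    + apply (@is_RInt_derive R_CompleteNormedModule (fun u => sin (c * (u - u0)) / c) (cm u0 (S k))).
      * intros x _. unfold cm. fold c. auto_derive. auto. unfold Rminus. field. lra.
      * intros x _. apply cm_cont.
    + unfold minus, plus, opp; simpl.
      replace (c * (u0 + / 2 - u0)) with (INR (S k) * PI) by (unfold c; field).
      replace (c * (u0 - / 2 - u0)) with (- (INR (S k) * PI)) by (unfold c; field).
      rewrite sin_neg, sin_nPI. field. lra.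
Qed.

Lemma cm_per u0 m x n : cm u0 m (x + INR n) = cm u0 m x.
Proof.
  unfold cm. replace (2 * PI * INR m * (x + INR n - u0)) with (2 * PI * INR m * (x - u0) + 2 * INR (m * n) * PI)
    by (rewrite mult_INR; ring).
  apply cos_period.
Qed.

Section PoissonConst.
Variable p : R.
Hypothesis Hp : 1 < p.
Variable g : R -> R.
Variable K : R.
Hypothesis Hg : domw p g K.
Hypothesis Hcoef : forall m, (0 < m)%nat ->
  IR (fun x => g x * cos (x * (2 * PI * INR m))) = 0 /\
  IR (fun x => g x * sin (x * (2 * PI * INR m))) = 0.

Lemma domw_trig (t : R -> R) : (forall x, continuous t x) -> (forall x, Rabs (t x) <= 1) ->
  domw p (fun x => g x * t x) K.
Proof.
  intros Ht Hb. destruct Hg as [Hc Hgb]. apply (domw_le p _ g K).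
  intros x. apply cont_mult; auto. auto.
  intros x. rewrite Rabs_mult. generalize (Hb x) (Rabs_pos (g x)) (Rabs_pos (t x)). nra.
Qed.

Lemma IR_cm u0 m : IR (gh g (cm u0 m)) = match m with O => IR g | S _ => 0 end.
Proof.
  destruct m as [|k].
  - apply IR_ext. intros x. unfold gh, cm. simpl. rewrite Rmult_0_r, Rmult_0_l, cos_0. ring.
  - set (v := 2 * PI * INR (S k)).
    destruct (Hcoef (S k) ltac:(lia)) as [H1 H2]. fold v in H1, H2.
    rewrite (IR_ext _ (fun x => cos (v * u0) * (g x * cos (x * v)) + sin (v * u0) * (g x * sin (x * v)))).
    + assert (Dc : domw p (fun x => g x * cos (x * v)) K).
      { apply domw_trig. intros; cont. intros; apply cos_le1. }
      assert (Ds : domw p (fun x => g x * sin (x * v)) K).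
      { apply domw_trig. intros; cont. intros; apply sin_le1. }
      rewrite (IR_plus p Hp _ _ _ _ (domw_scal p _ (cos (v * u0)) K Dc) (domw_scal p _ (sin (v * u0)) K Ds)).
      rewrite (IR_scal p Hp _ _ K Dc), (IR_scal p Hp _ _ K Ds), H1, H2. ring.
    + intros x. unfold gh, cm. fold v.
      replace (v * (x - u0)) with (x * v - v * u0) by ring.
      rewrite cos_minus. ring.
Qed.

Lemma poisson_const u0 : Pg g u0 = IR g.
Proof.
  destruct Hg as [Hgc Hgb].
  replace (Pg g u0) with ((fun u => Pg g u - IR g) u0 + IR g) by (simpl; ring).
  rewrite (fourier_unique (fun u => Pg g u - IR g) u0). ring.
  - intros x. apply cont_minus. apply (P_cont p Hp g K Hg). apply cont_const.
  - intros m.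
    rewrite (RInt_ext_R _ (fun u => Pg g u * cm u0 m u + (- IR g) * cm u0 m u)) by (intros; ring).
    rewrite (RInt_plus (V := R_CompleteNormedModule)).
    2: apply ex_RInt_cont; intros; apply cont_mult; [apply (P_cont p Hp g K Hg) | apply cm_cont].
    2: apply ex_RInt_cont; intros; apply cont_mult; [apply cont_const | apply cm_cont].
    rewrite RInt_scal_R by apply cm_cont.
    rewrite int_cm.
    replace (u0 + / 2) with (u0 - / 2 + 1) by field.
    rewrite (int_P p Hp g K Hg (cm u0 m) (cm_cont u0 m) (cm_per u0 m) (fun x => cos_le1 _)).
    rewrite IR_cm. unfold plus; simpl. destruct m; ring.
Qed.

End PoissonConst.


Lemma IR_pos p (Hp : 1 < p) f K : domw p f K -> (forall x, 0 <= f x) ->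
  forall x1, 0 < f x1 -> 0 < IR f.
Proof.
  intros Hd Hnn x1 Hx1.
  destruct Hd as [Hc Hb].
  destruct (cont_eps f x1 (f x1 / 2) (Hc x1)) as [d [Hd Hdd]]. lra.
  assert (HK : 0 <= K) by (apply (K_nonneg p f K Hb)).
  destruct (Tl_small p Hp (d * f x1 / 4 / (2 * K + 1))) as [A [HA HAB]].
  { apply Rdiv_lt_0_compat. nra. lra. }
  set (B := Rmax A (Rabs x1 + d)).
  assert (HB1 : A <= B) by apply Rmax_l.
  assert (HB2 : Rabs x1 + d <= B) by apply Rmax_r.
  specialize (HAB B HB1).
  assert (HT : 2 * K * Tl p B <= d * f x1 / 4).
  { assert (0 <= Tl p B) by (apply Tl_nonneg; auto; lra).
    apply Rle_trans with ((2 * K + 1) * Tl p B). nra.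
    apply Rle_trans with ((2 * K + 1) * (d * f x1 / 4 / (2 * K + 1))).
    apply Rmult_le_compat_l; lra. right; field; lra. }
  generalize (IR_bound p Hp f K (conj Hc Hb) B ltac:(generalize (Rabs_pos x1); lra)). intros X.
  assert (Hin : d * (f x1 / 2) <= RInt f (x1 - d / 2) (x1 + d / 2)).
  { replace d with (x1 + d / 2 - (x1 - d / 2)) at 1 by field.
    apply RInt_lb_const. lra. auto.
    intros x Hx. specialize (Hdd x ltac:(apply Rabs_def1; lra)). apply Rabs_def2 in Hdd. lra. }
  assert (Hl : 0 <= RInt f (- B) (x1 - d / 2)).
  { apply RInt_ge_0. generalize (Rle_abs (- x1)); rewrite Rabs_Ropp; lra.
    apply ex_RInt_cont; auto. intros; auto. }
  assert (Hr : 0 <= RInt f (x1 + d / 2) B).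
  { apply RInt_ge_0. generalize (Rle_abs x1); lra.
    apply ex_RInt_cont; auto. intros; auto. }
  assert (E : RInt f (- B) B = RInt f (- B) (x1 - d / 2) + RInt f (x1 - d / 2) (x1 + d / 2) + RInt f (x1 + d / 2) B).
  { rewrite !RInt_Chasles_R; auto. }
  assert (IR f - RInt f (- B) B >= - (2 * K * Tl p B)).
  { generalize (Rle_abs (- (IR f - RInt f (- B) B))). rewrite Rabs_Ropp. lra. }
  nra.
Qed.

Section Sig.
Variable sigma : R -> R.
Variable alpha : R.
Hypothesis Hal : 2 < alpha.
Hypothesis HS : sigmoidal_hyp sigma alpha.

Lemma s_mono x y : x <= y -> sigma x <= sigma y.
Proof. destruct HS as [H _]. auto. Qed.

Lemma s_neg x : sigma (- x) = 1 - sigma x.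
Proof. destruct HS as (_ & _ & _ & H & _). specialize (H x). lra. Qed.

Lemma s_cont x : continuous sigma x.
Proof. destruct HS as (_ & _ & _ & _ & H & _). apply cont_of_derive. auto. Qed.

Lemma s_lim_m eps : 0 < eps -> exists M, forall x, x < M -> Rabs (sigma x) < eps.
Proof.
  intros He. destruct HS as (_ & H & _). apply is_lim_spec in H.
  destruct (H (mkposreal eps He)) as [M HM]. exists M. intros x Hx.
  specialize (HM x Hx). simpl in HM. rewrite Rminus_0_r in HM. auto.
Qed.

Lemma s_lim_p eps : 0 < eps -> exists M, forall x, M < x -> Rabs (sigma x - 1) < eps.
Proof.
  intros He. destruct HS as (_ & _ & H & _). apply is_lim_spec in H.
  destruct (H (mkposreal eps He)) as [M HM]. exists M. intros x Hx.
  specialize (HM x Hx). simpl in HM. auto.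
Qed.

Lemma s_nonneg x : 0 <= sigma x.
Proof.
  destruct (Rle_dec 0 (sigma x)); auto. exfalso.
  destruct (s_lim_m (- sigma x)) as [M HM]. lra.
  set (y := Rmin (M - 1) x).
  assert (y < M) by (unfold y; generalize (Rmin_l (M - 1) x); lra).
  specialize (HM y H). assert (sigma y <= sigma x) by (apply s_mono; unfold y; apply Rmin_r).
  apply Rabs_def2 in HM. lra.
Qed.

Lemma s_le1 x : sigma x <= 1.
Proof. generalize (s_nonneg (- x)). rewrite s_neg. lra. Qed.

Definition ph := phi_sigma sigma.

Lemma ph_even x : ph (- x) = ph x.
Proof.
  unfold ph, phi_sigma.
  replace (- x + 1) with (- (x - 1)) by ring. replace (- x - 1) with (- (x + 1)) by ring.
  rewrite !s_neg. ring.
Qed.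

Lemma ph_nonneg x : 0 <= ph x.
Proof. unfold ph, phi_sigma. assert (sigma (x - 1) <= sigma (x + 1)) by (apply s_mono; lra). lra. Qed.

Lemma ph_le x : ph x <= / 2.
Proof. unfold ph, phi_sigma. generalize (s_nonneg (x - 1)) (s_le1 (x + 1)). lra. Qed.

Lemma ph_cont x : continuous ph x.
Proof.
  unfold ph, phi_sigma. apply cont_mult. apply cont_const.
  apply cont_minus.
  apply (continuous_comp (fun x => x + 1) sigma). cont. apply s_cont.
  apply (continuous_comp (fun x => x - 1) sigma). cont. apply s_cont.
Qed.


Lemma Rpower_pos a b : 0 < Rpower a b.
Proof. unfold Rpower. apply exp_pos. Qed.

Lemma Rpower_half y b : 0 < y -> Rpower (y / 2) (- b) = Rpower 2 b * Rpower y (- b).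
Proof.
  intros Hy. unfold Rpower. rewrite <- exp_plus. f_equal.
  rewrite ln_div by lra. ring.
Qed.

Lemma Rpower_sq y b : 0 < y -> y ^ 2 * Rpower y (- b) = Rpower y (2 - b).
Proof.
  intros Hy. replace (2 - b) with (INR 2 + - b) by (simpl; ring).
  rewrite Rpower_plus, Rpower_pow by auto. ring.
Qed.

Lemma Rpower_2y y q : 0 < y -> Rpower (2 * y) (- q) = Rpower 2 (- q) * Rpower y (- q).
Proof. intros Hy. rewrite Rpower_mult_distr; auto; lra. Qed.

Lemma Rpower_inv2 q : Rpower 2 (- q) * Rpower 2 q = 1.
Proof. unfold Rpower. rewrite <- exp_plus. replace (- q * ln 2 + q * ln 2) with 0 by ring. apply exp_0. Qed.

Lemma ph_decay : exists X0 K1, X0 <= -3 /\ 0 <= K1 /\ forall x, x <= X0 -> (1 + x ^ 2) * ph x <= K1 * w (alpha - 1) x.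
Proof.
  destruct HS as (_ & _ & _ & _ & _ & _ & _ & _ & [C [M [HM HC]]]).
  set (b := 1 + alpha).
  assert (HC0 : 0 <= C).
  { generalize (HC M (Rle_refl M)) (Rpower_pos (Rabs M) (-1 - alpha)) (Rabs_pos (sigma M)). nra. }
  exists (Rmin (M - 1) (-3)). exists (2 * C * Rpower 2 b * Rpower 2 (alpha - 1)).
  split. apply Rmin_r. split.
  { generalize (Rpower_pos 2 b) (Rpower_pos 2 (alpha - 1)). intros. 
    apply Rmult_le_pos. apply Rmult_le_pos. lra. lra. lra. }
  intros x Hx.
  generalize (Rmin_l (M - 1) (-3)) (Rmin_r (M - 1) (-3)). intros.
  set (y := - x).
  assert (Hy : 3 <= y) by (unfold y; lra).
  assert (Hp1 : Rabs (sigma (x + 1)) <= C * Rpower (y / 2) (- b)).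
  { eapply Rle_trans. apply HC. lra. apply Rmult_le_compat_l; auto.
    replace (-1 - alpha) with (- b) by (unfold b; ring).
    apply Rpower_neg_dec. unfold b; lra.
    rewrite Rabs_left by lra. unfold y; lra. }
  assert (Hp2 : Rabs (sigma (x - 1)) <= C * Rpower (y / 2) (- b)).
  { eapply Rle_trans. apply HC. lra. apply Rmult_le_compat_l; auto.
    replace (-1 - alpha) with (- b) by (unfold b; ring).
    apply Rpower_neg_dec. unfold b; lra.
    rewrite Rabs_left by lra. unfold y; lra. }
  assert (Hph : ph x <= C * Rpower 2 b * Rpower y (- b)).
  { unfold ph, phi_sigma. rewrite Rpower_half in Hp1, Hp2 by lra.
    generalize (Rle_abs (sigma (x + 1))) (Rle_abs (- sigma (x - 1))). rewrite Rabs_Ropp. intros.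
    rewrite Rmult_assoc. lra. }
  assert (Hx2 : 1 + x ^ 2 <= 2 * y ^ 2) by (unfold y; nra).
  assert (Hw : Rpower y (2 - b) <= Rpower 2 (alpha - 1) * w (alpha - 1) x).
  { unfold w. replace (2 - b) with (- (alpha - 1)) by (unfold b; ring).
    assert (Rpower (2 * y) (- (alpha - 1)) <= Rpower (1 + Rabs x) (- (alpha - 1))).
    { apply Rpower_neg_dec. lra. rewrite Rabs_left by lra. unfold y in *; lra. }
    rewrite Rpower_2y in H1 by lra.
    generalize (Rpower_inv2 (alpha - 1)) (Rpower_pos 2 (alpha - 1)). intros.
    apply Rmult_le_compat_l with (r := Rpower 2 (alpha - 1)) in H1. 2: lra.
    rewrite <- Rmult_assoc, (Rmult_comm (Rpower 2 (alpha - 1))), H2, Rmult_1_l in H1. auto. }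
  generalize (ph_nonneg x) (Rpower_pos y (- b)) (Rpower_pos 2 b). intros.
  assert (E : 2 * C * Rpower 2 b * Rpower 2 (alpha - 1) * w (alpha - 1) x
              >= 2 * C * Rpower 2 b * Rpower y (2 - b)).
  { generalize (Rpower_pos 2 b). intros. apply Rle_ge.
    rewrite (Rmult_assoc (2 * C * Rpower 2 b)). apply Rmult_le_compat_l. nra. auto. }
  rewrite <- Rpower_sq in E by lra.
  assert (0 <= 1 + x ^ 2) by nra.
  apply Rle_trans with (2 * y ^ 2 * (C * Rpower 2 b * Rpower y (- b))).
  { apply Rmult_le_compat; auto. }
  apply Rge_le in E. eapply Rle_trans. 2: exact E. right. ring.
Qed.


Lemma ph_bound : exists K0, forall x, (1 + x ^ 2) * Rabs (ph x) <= K0 * w (alpha - 1) x.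
Proof.
  destruct ph_decay as [X0 [K1 [HX0 [HK1 H1]]]].
  assert (Hp : 1 < alpha - 1) by lra.
  set (K2 := (1 + X0 ^ 2) / 2 / w (alpha - 1) X0).
  assert (HwX : 0 < w (alpha - 1) X0) by apply w_pos.
  assert (HK2 : 0 <= K2) by (unfold K2; apply Rmult_le_pos; [nra | left; apply Rinv_0_lt_compat; auto]).
  exists (K1 + K2).
  assert (Hneg : forall x, x <= 0 -> (1 + x ^ 2) * Rabs (ph x) <= (K1 + K2) * w (alpha - 1) x).
  { intros x Hx. rewrite Rabs_pos_eq by apply ph_nonneg.
    generalize (w_pos (alpha - 1) x). intros.
    destruct (Rle_dec x X0).
    - specialize (H1 x r). nra.
    - assert (Hw : w (alpha - 1) X0 <= w (alpha - 1) x).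
      { rewrite <- (w_abs (alpha - 1) x), <- (w_abs (alpha - 1) X0).
        apply (w_dec _ Hp). rewrite !Rabs_left1 by lra. split. lra. lra. }
      assert ((1 + x ^ 2) * ph x <= (1 + X0 ^ 2) / 2).
      { generalize (ph_le x) (ph_nonneg x). intros. 
        assert (x ^ 2 <= X0 ^ 2) by nra. nra. }
      assert ((1 + X0 ^ 2) / 2 = K2 * w (alpha - 1) X0) by (unfold K2; field; lra).
      assert (K2 * w (alpha - 1) X0 <= K2 * w (alpha - 1) x) by (apply Rmult_le_compat_l; auto).
      nra. }
  intros x. destruct (Rle_dec x 0). apply Hneg; auto.
  replace x with (- - x) by ring. rewrite ph_even, w_even.
  replace ((- - x) ^ 2) with ((- x) ^ 2) by ring. apply Hneg. lra.
Qed.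


Lemma s_zero : sigma 0 = / 2.
Proof. generalize (s_neg 0). rewrite Ropp_0. lra. Qed.

Lemma ph_odd_pt n : ph (2 * INR n + 1) = / 2 * (sigma (2 * INR (S n)) - sigma (2 * INR n)).
Proof. unfold ph, phi_sigma. rewrite S_INR. f_equal. f_equal; f_equal; ring. Qed.

Lemma ph_pos_search n : sigma 0 < sigma (2 * INR n) -> exists j, 0 < ph (2 * INR j + 1).
Proof.
  induction n; intros H.
  - simpl in H. rewrite Rmult_0_r in H. lra.
  - destruct (Rlt_dec 0 (ph (2 * INR n + 1))) as [Hp|Hp].
    + exists n; auto.
    + apply IHn. rewrite ph_odd_pt in Hp. lra.
Qed.

Lemma ph_pos : exists x1, 1 <= x1 /\ 0 < ph x1.
Proof.
  destruct (s_lim_p (/ 4)) as [M HM]. lra.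
  destruct (INR_unbounded (Rabs M)) as [n Hn].
  assert (H : M < 2 * INR n) by (generalize (Rle_abs M) (pos_INR n); lra).
  specialize (HM _ H). apply Rabs_def2 in HM.
  destruct (ph_pos_search n) as [j Hj]. rewrite s_zero. lra.
  exists (2 * INR j + 1). split; auto. generalize (pos_INR j); lra.
Qed.

End Sig.


Lemma right_zero (f : R -> R) x l : is_derive f x l -> (forall y, x < y -> f y = 0) -> f x = 0 /\ l = 0.
Proof.
  intros Hd Hz. apply is_derive_Reals in Hd.
  assert (Hfx : f x = 0).
  { destruct (Req_dec (f x) 0); auto. exfalso.
    destruct (Hd 1 Rlt_0_1) as [d Hdd].
    set (h := Rmin (d / 2) (Rabs (f x) / (2 * (1 + Rabs l)))).
    assert (Hl : 0 < 1 + Rabs l) by (generalize (Rabs_pos l); lra).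
    assert (Hfp : 0 < Rabs (f x)) by (apply Rabs_pos_lt; auto).
    assert (Hh : 0 < h) by (unfold h; apply Rmin_glb_lt; [generalize (cond_pos d); lra | apply Rdiv_lt_0_compat; lra]).
    assert (Hh1 : h <= d / 2) by apply Rmin_l.
    assert (Hh2 : h <= Rabs (f x) / (2 * (1 + Rabs l))) by apply Rmin_r.
    specialize (Hdd h ltac:(lra) ltac:(rewrite Rabs_pos_eq; generalize (cond_pos d); lra)).
    rewrite Hz in Hdd by lra.
    replace ((0 - f x) / h - l) with (- (f x / h + l)) in Hdd by (field; lra).
    rewrite Rabs_Ropp in Hdd.
    assert (Rabs (f x / h) <= Rabs (f x / h + l) + Rabs l).
    { replace (f x / h) with ((f x / h + l) + - l) at 1 by ring.
      eapply Rle_trans. apply Rabs_triang. rewrite Rabs_Ropp. lra. }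
    rewrite Rabs_div, (Rabs_pos_eq h) in H0 by lra.
    assert (Rabs (f x) / h >= 2 * (1 + Rabs l)).
    { apply Rle_ge. apply (Rmult_le_reg_r h). auto.
      replace (Rabs (f x) / h * h) with (Rabs (f x)) by (field; lra).
      apply (Rmult_le_compat_l (2 * (1 + Rabs l))) in Hh2. 2: lra.
      replace (2 * (1 + Rabs l) * (Rabs (f x) / (2 * (1 + Rabs l)))) with (Rabs (f x)) in Hh2 by (field; lra).
      lra. }
    lra. }
  split; auto.
  apply Rabs_eq_0. apply Rle_antisym. 2: apply Rabs_pos.
  apply Rnot_lt_le. intros Hlt.
  destruct (Hd (Rabs l) Hlt) as [d Hdd].
  specialize (Hdd (d / 2) ltac:(generalize (cond_pos d); lra) ltac:(rewrite Rabs_pos_eq; generalize (cond_pos d); lra)).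
  rewrite Hz, Hfx in Hdd by (generalize (cond_pos d); lra).
  replace ((0 - 0) / (d / 2) - l) with (- l) in Hdd by (field; generalize (cond_pos d); lra).
  rewrite Rabs_Ropp in Hdd. lra.
Qed.

Lemma left_zero (f : R -> R) x l : is_derive f x l -> (forall y, y < x -> f y = 0) -> f x = 0 /\ l = 0.
Proof.
  intros Hd Hz.
  assert (Hd' : is_derive (fun y => f (- y)) (- x) ((-1) * l)).
  { apply (is_derive_comp f (fun y => - y)). rewrite Ropp_involutive. auto.
    auto_derive; auto; ring. }
  destruct (right_zero _ _ _ Hd') as [H1 H2].
  { intros y Hy. apply Hz. lra. }
  rewrite Ropp_involutive in H1. split; auto. lra.
Qed.

Lemma is_zsum_ext (a b : Z -> R) l : (forall k, a k = b k) -> is_zsum a l -> is_zsum b l.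
Proof.
  intros H [l1 [l2 [H1 [H2 H3]]]]. exists l1, l2. split; [|split; auto].
  apply (is_series_ext _ _ _ (fun n => H (Z.of_nat n)) H1).
  apply (is_series_ext _ _ _ (fun n => H (- Z.of_nat n - 1)%Z) H2).
Qed.

Lemma zsum_Pg p (Hp : 1 < p) g K : domw p g K -> forall u, is_zsum (fun k => g (u - IZR k)) (Pg g u).
Proof.
  intros Hg u. exists (Series (sa g u)), (Series (sb g u)). split; [|split; auto].
  - apply (is_series_ext (sa g u)). intros n. unfold sa. rewrite INR_IZR_INZ. auto.
    apply Series_correct. apply (sa_ex p Hp g K Hg).
  - apply (is_series_ext (sb g u)). intros n. unfold sb. f_equal.
    rewrite minus_IZR, opp_IZR, <- INR_IZR_INZ. ring.
    apply Series_correct. apply (sb_ex p Hp g K Hg).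
Qed.

Lemma is_derive_const0 x : is_derive (fun _ : R => 0) x 0.
Proof. auto_derive; auto. Qed.

Theorem lemma4p2 (sigma : R -> R) (alpha : R) :
  2 < alpha ->
  sigmoidal_hyp sigma alpha ->
  (FT_deriv_cond (phi_sigma sigma) ->
     forall u : R,
       is_moment (phi_sigma sigma) 1 u 0 /\
       exists L : R,
         is_moment (phi_sigma sigma) 2 u L /\
         is_derive_n (FT_re (phi_sigma sigma)) 2 0 (- L) /\
         is_derive_n (FT_im (phi_sigma sigma)) 2 0 0 /\
         0 < L) /\
  ((forall v, 2 * PI < Rabs v ->
      FT_re (phi_sigma sigma) v = 0 /\ FT_im (phi_sigma sigma) v = 0) ->
     FT_deriv_cond (phi_sigma sigma)).
Proof.
  intros Hal HS.
  assert (Hp : 1 < alpha - 1) by lra.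
  destruct (ph_bound sigma alpha Hal HS) as [K0 HK0].
  unfold ph in HK0.
  set (p := alpha - 1) in *.
  set (f := phi_sigma sigma) in *.
  assert (Hc : forall x, continuous f x) by (intros x; apply (ph_cont sigma alpha HS)).
  assert (Hev : forall x, f (- x) = f x) by (intros x; apply (ph_even sigma alpha HS)).
  assert (Hnn : forall x, 0 <= f x) by (intros x; apply (ph_nonneg sigma alpha HS)).
  assert (HF0 : forall v, is_derive (FT_re f) v (F1 f v)) by (intros v; exact (F0_deriv p Hp f K0 Hc HK0 v)).
  assert (HF1 : forall v, is_derive (F1 f) v (F2 f v)) by (intros v; exact (F1_deriv p Hp f K0 Hc HK0 v)).
  assert (HD0 : forall v, Derive (FT_re f) v = F1 f v) by (intros v; apply is_derive_unique; auto).
  assert (Him : forall v, FT_im f v = 0).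
  { intros v. unfold FT_im. change (- IR (fun x => f x * sin (x * v)) = 0).
    rewrite (IR_odd p Hp _ K0 (ds p f K0 Hc HK0 v)). ring.
    intros x. replace (- x * v) with (- (x * v)) by ring. rewrite sin_neg, Hev. ring. }
  assert (HimD : forall v, is_derive (FT_im f) v 0).
  { intros v. apply (is_derive_ext (fun _ => 0)). intros; rewrite Him; auto. apply is_derive_const0. }
  assert (HimD2 : forall v, is_derive (Derive (FT_im f)) v 0).
  { intros v. apply (is_derive_ext (fun _ => 0)). intros t. symmetry. apply is_derive_unique. apply HimD.
    apply is_derive_const0. }
  split.
  - intros Hcond u.
    assert (HF1z : forall m, (0 < m)%nat -> F1 f (2 * PI * INR m) = 0).
    { intros m Hm. destruct (Hcond (Z.of_nat m) 1%nat) as [H1 _]. lia. auto.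
      change (is_derive (FT_re f) (2 * PI * IZR (Z.of_nat m)) 0) in H1.
      rewrite <- INR_IZR_INZ in H1.
      rewrite <- HD0. apply is_derive_unique. auto. }
    assert (HF2z : forall m, (0 < m)%nat -> F2 f (2 * PI * INR m) = 0).
    { intros m Hm. destruct (Hcond (Z.of_nat m) 2%nat) as [H1 _]. lia. auto.
      change (is_derive (Derive (FT_re f)) (2 * PI * IZR (Z.of_nat m)) 0) in H1.
      rewrite <- INR_IZR_INZ in H1.
      apply (is_derive_ext _ (F1 f)) in H1. 2: apply HD0.
      apply (is_derive_unique (F1 f)) in H1. rewrite <- H1.
      symmetry. apply is_derive_unique. auto. }
    set (g1 := fun x => f x * (- x) ^ 1).
    assert (Hg1 : domw p g1 K0).
    { split. intro y; unfold g1; cont. 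
      intros x. unfold g1. rewrite Rabs_mult. simpl. rewrite Rmult_1_r, Rabs_Ropp, Rmult_comm.
      apply (xph_bd p f K0 HK0). }
    assert (Hg1o : forall x, g1 (- x) = - g1 x) by (intros x; unfold g1; rewrite Hev; ring).
    assert (Hcoef1 : forall m, (0 < m)%nat ->
      IR (fun x => g1 x * cos (x * (2 * PI * INR m))) = 0 /\
      IR (fun x => g1 x * sin (x * (2 * PI * INR m))) = 0).
    { intros m Hm. split.
      - apply (IR_odd p Hp _ K0). apply domw_trig; auto. intros; cont. intros; apply cos_le1.
        intros x. rewrite Hg1o. replace (- x * (2 * PI * INR m)) with (- (x * (2 * PI * INR m))) by ring.
        rewrite cos_neg. ring.
      - rewrite <- (HF1z m Hm). apply IR_ext. intros x. unfold g1. ring. }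
    assert (IRg1 : IR g1 = 0) by (apply (IR_odd p Hp _ K0 Hg1 Hg1o)).
    split.
    + unfold is_moment. apply (is_zsum_ext (fun k => g1 (u - IZR k))).
      { intros k. unfold g1. f_equal. f_equal. ring. }
      rewrite <- IRg1, <- (poisson_const p Hp g1 K0 Hg1 Hcoef1 u). apply (zsum_Pg p Hp g1 K0 Hg1).
    + set (g2 := fun x => f x * (- x) ^ 2).
      assert (Hg2 : domw p g2 K0).
      { split. intro y; unfold g2; cont. 
        intros x. unfold g2. rewrite Rabs_mult.
        replace ((- x) ^ 2) with (x ^ 2) by ring. rewrite (Rabs_pos_eq (x ^ 2)) by nra.
        rewrite Rmult_comm. apply (x2ph_bd p f K0 HK0). }
      assert (Hg2e : forall x, g2 (- x) = g2 x) by (intros x; unfold g2; rewrite Hev; ring).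
      assert (Hcoef2 : forall m, (0 < m)%nat ->
        IR (fun x => g2 x * cos (x * (2 * PI * INR m))) = 0 /\
        IR (fun x => g2 x * sin (x * (2 * PI * INR m))) = 0).
      { intros m Hm. split.
        - rewrite (IR_ext _ (fun x => -1 * (- (x ^ 2 * f x * cos (x * (2 * PI * INR m)))))).
          rewrite (IR_scal p Hp _ (-1) K0 (d2 p f K0 Hc HK0 _)).
          change (-1 * F2 f (2 * PI * INR m) = 0). rewrite HF2z by auto. ring.
          intros x. unfold g2. ring.
        - apply (IR_odd p Hp _ K0). apply domw_trig; auto. intros; cont. intros; apply sin_le1.
          intros x. rewrite Hg2e. replace (- x * (2 * PI * INR m)) with (- (x * (2 * PI * INR m))) by ring.
          rewrite sin_neg. ring. }
      exists (IR g2). split; [|split; [|split]].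
      * unfold is_moment. apply (is_zsum_ext (fun k => g2 (u - IZR k))).
        { intros k. unfold g2. f_equal. f_equal. ring. }
        rewrite <- (poisson_const p Hp g2 K0 Hg2 Hcoef2 u). apply (zsum_Pg p Hp g2 K0 Hg2).
      * change (is_derive (Derive (FT_re f)) 0 (- IR g2)).
        apply (is_derive_ext (F1 f)). intros; symmetry; apply HD0.
        replace (- IR g2) with (F2 f 0). apply HF1.
        unfold F2. rewrite (IR_ext _ (fun x => -1 * g2 x)). rewrite (IR_scal p Hp _ (-1) K0 Hg2). ring.
        intros x. unfold g2. rewrite Rmult_0_r, cos_0. ring.
      * change (is_derive (Derive (FT_im f)) 0 0). apply HimD2.
      * destruct (ph_pos sigma alpha HS) as [x1 [Hx1 Hpx1]].
        apply (IR_pos p Hp g2 K0 Hg2) with x1.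
        intros x. unfold g2. apply Rmult_le_pos; auto. nra.
        unfold g2. apply Rmult_lt_0_compat. auto. nra.
  - intros Hband k s Hk Hs.
    assert (Z : forall v, 2 * PI <= Rabs v -> F1 f v = 0 /\ F2 f v = 0).
    { intros v Hv. destruct (Rle_dec 0 v) as [Hv0|Hv0].
      - rewrite Rabs_pos_eq in Hv by auto.
        assert (R1 : forall y, v <= y -> F1 f y = 0).
        { intros y Hy. apply (right_zero (FT_re f) y (F1 f y) (HF0 y)).
          intros z Hz. apply Hband. rewrite Rabs_pos_eq; lra. }
        split. apply R1; lra.
        apply (right_zero (F1 f) v (F2 f v) (HF1 v)). intros z Hz. apply R1. lra.
      - rewrite Rabs_left in Hv by lra.
        assert (R1 : forall y, y <= v -> F1 f y = 0).
        { intros y Hy. apply (left_zero (FT_re f) y (F1 f y) (HF0 y)).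
          intros z Hz. apply Hband. rewrite Rabs_left; lra. }
        split. apply R1; lra.
        apply (left_zero (F1 f) v (F2 f v) (HF1 v)). intros z Hz. apply R1. lra. }
    assert (Hkv : 2 * PI <= Rabs (2 * PI * IZR k)).
    { assert (HPI : 0 < PI) by apply PI_RGT_0.
      rewrite Rabs_mult, (Rabs_pos_eq (2 * PI)) by lra.
      assert (1 <= Rabs (IZR k)).
      { destruct (Z.lt_trichotomy k 0) as [Hl|[He|Hg]].
        - rewrite Rabs_left. assert (IZR k <= -1) by (apply IZR_le; lia). lra. apply IZR_lt; auto.
        - contradiction.
        - rewrite Rabs_pos_eq. apply IZR_le; lia. apply IZR_le; lia. }
      nra. }
    destruct (Z _ Hkv) as [Z1 Z2].
    destruct Hs as [Hs|Hs]; subst s; split.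
    + change (is_derive (FT_re f) (2 * PI * IZR k) 0). rewrite <- Z1. apply HF0.
    + change (is_derive (FT_im f) (2 * PI * IZR k) 0). apply HimD.
    + change (is_derive (Derive (FT_re f)) (2 * PI * IZR k) 0).
      apply (is_derive_ext (F1 f)). intros; symmetry; apply HD0. rewrite <- Z2. apply HF1.
    + change (is_derive (Derive (FT_im f)) (2 * PI * IZR k) 0). apply HimD2.
Qed.
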